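(* Let $t$, $u$ be two terms of type $A$ in context $\Gamma$ of $\mathrm{IS4}_C$. If for all Cartesian closed categories $\mathcal{M}$ equipped with a right-adjoint comonad it is the case that $[\![t]\!] = [\![u]\!] : \mathcal{M}([\![\Gamma]\!],[\![A]\!])$, then $t \equiv u$ in context $\Gamma$ at type $A$.
   Context: $\mathrm{IS4}_C$: types $A ::= \iota\mid A\to B\mid\Box A$; contexts $\Gamma::=\cdot\mid\Gamma,A\mid\Gamma,\mathsf{lock}$ ($\mathsf{lock}$ the context lock); $\Delta\mathrel{R}\Gamma$ holds when $\Gamma$ extends $\Delta$ by any types and locks. Terms: STLC plus $\mathsf{box}\,t:\Box A$ in $\Gamma$ from $t:A$ in $\Gamma,\mathsf{lock}$, and $\mathsf{unbox}(t,e):A$ in $\Gamma$ from $t:\Box A$ in $\Delta$ and $e:\Delta\mathrel{R}\Gamma$. Equational theory: function $\beta,\eta$; $\mathsf{unbox}(\mathsf{box}\,t,e)\equiv t[(\mathrm{id},e)]$; $t\equiv\mathsf{box}(\mathsf{unbox}(t,e_1))$ with $e_1$ adding one lock (and the identification of explicit weakening $\mathsf{unbox}(t,e\cdot e')\equiv\mathsf{unbox}(\mathit{wk}(\mathit{toOPE}(e),t),e')$ for lock-free $e$). Interpretation is in a CCC with a comonad $\Box$ having a left adjoint $\mathsf{lock}\dashv\Box$. *)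

(* Defs.v *)
Inductive Ty : Type :=
| iota : Ty
| arr : Ty -> Ty -> Ty
| box : Ty -> Ty.

Inductive Ctx : Type :=
| cnil : Ctx
| cext : Ctx -> Ty -> Ctx
| clock : Ctx -> Ctx.

(* Ext D G  :  D R G, i.e. G extends D by any types and locks *)
Inductive Ext (D : Ctx) : Ctx -> Type :=
| ext_nil : Ext D D
| ext_ty : forall G A, Ext D G -> Ext D (cext G A)
| ext_lk : forall G, Ext D G -> Ext D (clock G).
Arguments ext_nil {D}.
Arguments ext_ty {D G} A e.
Arguments ext_lk {D G} e.

Inductive LFExt (D : Ctx) : Ctx -> Type :=
| lf_nil : LFExt D D
| lf_ty : forall G A, LFExt D G -> LFExt D (cext G A).
Arguments lf_nil {D}.
Arguments lf_ty {D G} A e.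

Fixpoint extApp {D G G'} (e : Ext D G) (e' : Ext G G') {struct e'} : Ext D G' :=
  match e' in Ext _ X return Ext D X with
  | ext_nil => e
  | ext_ty A e'' => ext_ty A (extApp e e'')
  | ext_lk e'' => ext_lk (extApp e e'')
  end.

Fixpoint lfToExt {D G} (e : LFExt D G) : Ext D G :=
  match e in LFExt _ X return Ext D X with
  | lf_nil => ext_nil
  | lf_ty A e' => ext_ty A (lfToExt e')
  end.

(* variables cannot be used across a lock *)
Inductive Var : Ctx -> Ty -> Type :=
| vz : forall G A, Var (cext G A) A
| vs : forall G A B, Var G A -> Var (cext G B) A.
Arguments vz {G A}.
Arguments vs {G A} B v.

Inductive Tm : Ctx -> Ty -> Type :=
| var : forall G A, Var G A -> Tm G A
| lam : forall G A B, Tm (cext G A) B -> Tm G (arr A B)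
| app : forall G A B, Tm G (arr A B) -> Tm G A -> Tm G B
| tbox : forall G A, Tm (clock G) A -> Tm G (box A)
| unbox : forall D G A, Tm D (box A) -> Ext D G -> Tm G A.
Arguments var {G A} v.
Arguments lam {G A B} t.
Arguments app {G A B} t u.
Arguments tbox {G A} t.
Arguments unbox {D G A} t e.

Fixpoint lfVar {D G A} (e : LFExt D G) (v : Var D A) : Var G A :=
  match e in LFExt _ X return Var X A with
  | lf_nil => v
  | lf_ty B e' => vs B (lfVar e' v)
  end.

(* G' is G with extra *types* interleaved (locks are never dropped).   *)

Fixpoint OPE (G' G : Ctx) {struct G} : Type :=
  match G with
  | cnil => LFExt cnil G'
  | cext G0 A => { G1 : Ctx & (OPE G1 G0 * LFExt (cext G1 A) G')%type }
  | clock G0 => { G1 : Ctx & (OPE G1 G0 * LFExt (clock G1) G')%type }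
  end.

Fixpoint idOPE (G : Ctx) : OPE G G :=
  match G return OPE G G with
  | cnil => lf_nil
  | cext G0 A => existT _ G0 (idOPE G0, lf_nil)
  | clock G0 => existT _ G0 (idOPE G0, lf_nil)
  end.

Definition dropOPE {G G'} (B : Ty) : OPE G' G -> OPE (cext G' B) G :=
  match G return OPE G' G -> OPE (cext G' B) G with
  | cnil => fun o => lf_ty B o
  | cext G0 A => fun o =>
      match o with existT _ G1 (o1, lf) => existT _ G1 (o1, lf_ty B lf) end
  | clock G0 => fun o =>
      match o with existT _ G1 (o1, lf) => existT _ G1 (o1, lf_ty B lf) end
  end.

Definition keepOPE {G G'} (A : Ty) (o : OPE G' G) : OPE (cext G' A) (cext G A) :=
  existT _ G' (o, lf_nil).

Definition keepLockOPE {G G'} (o : OPE G' G) : OPE (clock G') (clock G) :=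
  existT _ G' (o, lf_nil).

Fixpoint toOPE {D G} (e : LFExt D G) : OPE G D :=
  match e in LFExt _ X return OPE X D with
  | lf_nil => idOPE D
  | lf_ty A e' => dropOPE A (toOPE e')
  end.

Fixpoint wkVar {G A} (v : Var G A) {struct v} : forall G', OPE G' G -> Var G' A :=
  match v in Var X A0 return forall G', OPE G' X -> Var G' A0 with
  | @vz G0 A0 => fun G' o =>
      match o with existT _ G1 (_, lf) => lfVar lf (@vz G1 A0) end
  | @vs G0 A0 B v' => fun G' o =>
      match o with existT _ G1 (o1, lf) => lfVar lf (vs B (wkVar v' G1 o1)) end
  end.

Fixpoint factorOPE {D G} (e : Ext D G) {struct e}
  : forall G', OPE G' G -> { D' : Ctx & (OPE D' D * Ext D' G')%type } :=
  match e in Ext _ X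
        return forall G', OPE G' X -> { D' : Ctx & (OPE D' D * Ext D' G')%type } with
  | ext_nil => fun G' o => existT _ G' (o, ext_nil)
  | @ext_ty _ G0 A e' => fun G' o =>
      match o with existT _ G1 (o1, lf) =>
        match factorOPE e' G1 o1 with existT _ D' (o2, e2) =>
          existT _ D' (o2, extApp e2 (extApp (ext_ty A ext_nil) (lfToExt lf)))
        end
      end
  | @ext_lk _ G0 e' => fun G' o =>
      match o with existT _ G1 (o1, lf) =>
        match factorOPE e' G1 o1 with existT _ D' (o2, e2) =>
          existT _ D' (o2, extApp e2 (extApp (ext_lk ext_nil) (lfToExt lf)))
        end
      end
  end.

Fixpoint wk {G A} (t : Tm G A) {struct t} : forall G', OPE G' G -> Tm G' A :=
  match t in Tm X A0 return forall G', OPE G' X -> Tm G' A0 with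
  | var v => fun G' o => var (wkVar v G' o)
  | @lam G0 A1 B t' => fun G' o => lam (wk t' (cext G' A1) (keepOPE A1 o))
  | app t1 t2 => fun G' o => app (wk t1 G' o) (wk t2 G' o)
  | tbox t' => fun G' o => tbox (wk t' (clock G') (keepLockOPE o))
  | unbox t' e => fun G' o =>
      match factorOPE e G' o with existT _ D' (o', e') => unbox (wk t' D' o') e' end
  end.

Fixpoint Sub (G D : Ctx) {struct D} : Type :=
  match D with
  | cnil => unit
  | cext D0 A => (Sub G D0 * Tm G A)%type
  | clock D0 => { G' : Ctx & (Sub G' D0 * Ext G' G)%type }
  end.

Fixpoint wkSub (D : Ctx) {struct D} : forall G G', OPE G' G -> Sub G D -> Sub G' D :=
  match D return forall G G', OPE G' G -> Sub G D -> Sub G' D with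
  | cnil => fun _ _ _ _ => tt
  | cext D0 A => fun G G' o s => (wkSub D0 G G' o (fst s), wk (snd s) G' o)
  | clock D0 => fun G G' o s =>
      match s with existT _ G1 (s1, e1) =>
        match factorOPE e1 G' o with existT _ G2 (o2, e2) =>
          existT _ G2 (wkSub D0 G1 G2 o2 s1, e2)
        end
      end
  end.

Fixpoint factorSub {D' D} (e : Ext D' D) {struct e}
  : forall G, Sub G D -> { G' : Ctx & (Sub G' D' * Ext G' G)%type } :=
  match e in Ext _ X
        return forall G, Sub G X -> { G' : Ctx & (Sub G' D' * Ext G' G)%type } with
  | ext_nil => fun G s => existT _ G (s, ext_nil)
  | ext_ty A e' => fun G s => factorSub e' G (fst s)
  | ext_lk e' => fun G s =>
      match s with existT _ G1 (s1, e1) =>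
        match factorSub e' G1 s1 with existT _ G2 (s2, e2) =>
          existT _ G2 (s2, extApp e2 e1)
        end
      end
  end.

Fixpoint substVar {D A} (v : Var D A) {struct v} : forall G, Sub G D -> Tm G A :=
  match v in Var X A0 return forall G, Sub G X -> Tm G A0 with
  | vz => fun G s => snd s
  | vs _ v' => fun G s => substVar v' G (fst s)
  end.

Fixpoint idSub (G : Ctx) : Sub G G :=
  match G return Sub G G with
  | cnil => tt
  | cext G0 A => (wkSub G0 G0 (cext G0 A) (dropOPE A (idOPE G0)) (idSub G0), var vz)
  | clock G0 => existT _ G0 (idSub G0, ext_lk ext_nil)
  end.

Fixpoint subst {D A} (t : Tm D A) {struct t} : forall G, Sub G D -> Tm G A :=
  match t in Tm X A0 return forall G, Sub G X -> Tm G A0 with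
  | var v => fun G s => substVar v G s
  | @lam D0 A1 B t' => fun G s =>
      lam (subst t' (cext G A1)
             (wkSub D0 G (cext G A1) (dropOPE A1 (idOPE G)) s, var vz))
  | app t1 t2 => fun G s => app (subst t1 G s) (subst t2 G s)
  | @tbox D0 A1 t' => fun G s =>
      tbox (subst t' (clock G)
              (existT (fun G' => (Sub G' D0 * Ext G' (clock G))%type)
                      G (s, ext_lk ext_nil)))
  | unbox t' e => fun G s =>
      match factorSub e G s with existT _ G' (s', e') => unbox (subst t' G' s') e' end
  end.

Inductive conv : forall G A, Tm G A -> Tm G A -> Prop :=
| cv_refl : forall G A (t : Tm G A), conv _ _ t t
| cv_sym : forall G A (t u : Tm G A), conv _ _ t u -> conv _ _ u t
| cv_trans : forall G A (t u v : Tm G A), conv _ _ t u -> conv _ _ u v -> conv _ _ t v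
| cv_lam : forall G A B (t t' : Tm (cext G A) B), conv _ _ t t' -> conv _ _ (lam t) (lam t')
| cv_app : forall G A B (t t' : Tm G (arr A B)) (u u' : Tm G A),
    conv _ _ t t' -> conv _ _ u u' -> conv _ _ (app t u) (app t' u')
| cv_box : forall G A (t t' : Tm (clock G) A), conv _ _ t t' -> conv _ _ (tbox t) (tbox t')
| cv_unbox : forall D G A (t t' : Tm D (box A)) (e : Ext D G),
    conv _ _ t t' -> conv _ _ (unbox t e) (unbox t' e)
| cv_beta_fun : forall G A B (t : Tm (cext G A) B) (u : Tm G A),
    conv _ _ (app (lam t) u) (subst t G (idSub G, u))
| cv_eta_fun : forall G A B (t : Tm G (arr A B)),
    conv _ _ t (lam (app (wk t (cext G A) (dropOPE A (idOPE G))) (var vz)))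
| cv_beta_box : forall D G A (t : Tm (clock D) A) (e : Ext D G),
    conv _ _ (unbox (tbox t) e)
         (subst t G (existT (fun G' => (Sub G' D * Ext G' G)%type) D (idSub D, e)))
| cv_eta_box : forall G A (t : Tm G (box A)),
    conv _ _ t (tbox (unbox t (ext_lk ext_nil)))
| cv_wk : forall D D'' G A (t : Tm D (box A)) (e : LFExt D D'') (e' : Ext D'' G),
    conv _ _ (unbox t (extApp (lfToExt e) e')) (unbox (wk t D'' (toOPE e)) e').
Arguments conv {G A} t u.

Record Model : Type := {
  Ob : Type;
  Hom : Ob -> Ob -> Type;
  idm : forall X, Hom X X;
  comp : forall X Y Z, Hom Y Z -> Hom X Y -> Hom X Z;
  comp_id_l : forall X Y (f : Hom X Y), comp _ _ _ (idm Y) f = f;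
  comp_id_r : forall X Y (f : Hom X Y), comp _ _ _ f (idm X) = f;
  comp_assoc : forall X Y Z W (f : Hom X Y) (g : Hom Y Z) (h : Hom Z W),
      comp _ _ _ h (comp _ _ _ g f) = comp _ _ _ (comp _ _ _ h g) f;
  one : Ob;
  bang : forall X, Hom X one;
  bang_uniq : forall X (f : Hom X one), f = bang X;
  prod : Ob -> Ob -> Ob;
  pi1 : forall X Y, Hom (prod X Y) X;
  pi2 : forall X Y, Hom (prod X Y) Y;
  pair : forall X Y Z, Hom Z X -> Hom Z Y -> Hom Z (prod X Y);
  pi1_pair : forall X Y Z (f : Hom Z X) (g : Hom Z Y),
      comp _ _ _ (pi1 X Y) (pair _ _ _ f g) = f;
  pi2_pair : forall X Y Z (f : Hom Z X) (g : Hom Z Y),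
      comp _ _ _ (pi2 X Y) (pair _ _ _ f g) = g;
  pair_uniq : forall X Y Z (h : Hom Z (prod X Y)),
      h = pair _ _ _ (comp _ _ _ (pi1 X Y) h) (comp _ _ _ (pi2 X Y) h);
  exp : Ob -> Ob -> Ob;
  ev : forall X Y, Hom (prod (exp X Y) X) Y;
  cur : forall X Y Z, Hom (prod Z X) Y -> Hom Z (exp X Y);
  ev_cur : forall X Y Z (f : Hom (prod Z X) Y),
      comp _ _ _ (ev X Y)
        (pair _ _ _ (comp _ _ _ (cur _ _ _ f) (pi1 Z X)) (pi2 Z X)) = f;
  cur_uniq : forall X Y Z (g : Hom Z (exp X Y)),
      cur _ _ _ (comp _ _ _ (ev X Y)
                   (pair _ _ _ (comp _ _ _ g (pi1 Z X)) (pi2 Z X))) = g;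
  Bx : Ob -> Ob;
  bmap : forall X Y, Hom X Y -> Hom (Bx X) (Bx Y);
  bmap_id : forall X, bmap _ _ (idm X) = idm (Bx X);
  bmap_comp : forall X Y Z (f : Hom X Y) (g : Hom Y Z),
      bmap _ _ (comp _ _ _ g f) = comp _ _ _ (bmap _ _ g) (bmap _ _ f);
  beps : forall X, Hom (Bx X) X;
  beps_nat : forall X Y (f : Hom X Y),
      comp _ _ _ (beps Y) (bmap _ _ f) = comp _ _ _ f (beps X);
  bdelta : forall X, Hom (Bx X) (Bx (Bx X));
  bdelta_nat : forall X Y (f : Hom X Y),
      comp _ _ _ (bdelta Y) (bmap _ _ f) = comp _ _ _ (bmap _ _ (bmap _ _ f)) (bdelta X);
  comonad_l : forall X, comp _ _ _ (beps (Bx X)) (bdelta X) = idm (Bx X);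
  comonad_r : forall X, comp _ _ _ (bmap _ _ (beps X)) (bdelta X) = idm (Bx X);
  comonad_assoc : forall X,
      comp _ _ _ (bdelta (Bx X)) (bdelta X) = comp _ _ _ (bmap _ _ (bdelta X)) (bdelta X);
  Lk : Ob -> Ob;
  lmap : forall X Y, Hom X Y -> Hom (Lk X) (Lk Y);
  lmap_id : forall X, lmap _ _ (idm X) = idm (Lk X);
  lmap_comp : forall X Y Z (f : Hom X Y) (g : Hom Y Z),
      lmap _ _ (comp _ _ _ g f) = comp _ _ _ (lmap _ _ g) (lmap _ _ f);
  aunit : forall X, Hom X (Bx (Lk X));
  acounit : forall Y, Hom (Lk (Bx Y)) Y;
  aunit_nat : forall X Y (f : Hom X Y),
      comp _ _ _ (aunit Y) f = comp _ _ _ (bmap _ _ (lmap _ _ f)) (aunit X);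
  acounit_nat : forall X Y (f : Hom X Y),
      comp _ _ _ (acounit Y) (lmap _ _ (bmap _ _ f)) = comp _ _ _ f (acounit X);
  triangle_l : forall X,
      comp _ _ _ (acounit (Lk X)) (lmap _ _ (aunit X)) = idm (Lk X);
  triangle_r : forall Y,
      comp _ _ _ (bmap _ _ (acounit Y)) (aunit (Bx Y)) = idm (Bx Y)
}.

Arguments idm {m} X.
Arguments comp {m X Y Z} g f.
Arguments one {m}.
Arguments prod {m} X Y.
Arguments pi1 {m X Y}.
Arguments pi2 {m X Y}.
Arguments pair {m X Y Z} f g.
Arguments exp {m} X Y.
Arguments ev {m X Y}.
Arguments cur {m X Y Z} f.
Arguments Bx {m} X.
Arguments bmap {m X Y} f.
Arguments beps {m} X.
Arguments bdelta {m} X.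
Arguments Lk {m} X.
Arguments lmap {m X Y} f.
Arguments aunit {m} X.
Arguments acounit {m} Y.

Section Interp.
Variable M : Model.
Variable I : Ob M.

Fixpoint semTy (A : Ty) : Ob M :=
  match A with
  | iota => I
  | arr A B => exp (semTy A) (semTy B)
  | box A => Bx (semTy A)
  end.

Fixpoint semCtx (G : Ctx) : Ob M :=
  match G with
  | cnil => one
  | cext G A => prod (semCtx G) (semTy A)
  | clock G => Lk (semCtx G)
  end.

Fixpoint semVar {G A} (v : Var G A) : Hom M (semCtx G) (semTy A) :=
  match v in Var X A0 return Hom M (semCtx X) (semTy A0) with
  | vz => pi2
  | vs _ v' => comp (semVar v') pi1
  end.

Fixpoint semUnbox {D G} (e : Ext D G) {struct e}
  : forall X, Hom M (semCtx D) (Bx X) -> Hom M (semCtx G) X :=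
  match e in Ext _ Y return forall X, Hom M (semCtx D) (Bx X) -> Hom M (semCtx Y) X with
  | ext_nil => fun X f => comp (beps X) f
  | ext_ty _ e' => fun X f => comp (semUnbox e' X f) pi1
  | ext_lk e' => fun X f =>
      comp (acounit X) (lmap (semUnbox e' (Bx X) (comp (bdelta X) f)))
  end.

Fixpoint semTm {G A} (t : Tm G A) : Hom M (semCtx G) (semTy A) :=
  match t in Tm X A0 return Hom M (semCtx X) (semTy A0) with
  | var v => semVar v
  | lam t' => cur (semTm t')
  | app t1 t2 => comp ev (pair (semTm t1) (semTm t2))
  | @tbox G0 _ t' => comp (bmap (semTm t')) (aunit (semCtx G0))
  | @unbox _ _ A0 t' e => semUnbox e (semTy A0) (semTm t')
  end.

End Interp.

(* Main.v *)
Require Import Defs.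
From Stdlib Require Import Program.Equality FunctionalExtensionality ProofIrrelevance Lia.

Fixpoint clen (G : Ctx) : nat :=
  match G with cnil => 0 | cext G _ => S (clen G) | clock G => S (clen G) end.

Lemma ext_len {D G} (e : Ext D G) : clen D <= clen G.
Proof. induction e; simpl; lia. Qed.

Lemma ext_unique {D G} (e1 e2 : Ext D G) : e1 = e2.
Proof.
  induction e1; dependent destruction e2; auto.
  - pose proof (ext_len e2); simpl in *; lia.
  - pose proof (ext_len e2); simpl in *; lia.
  - pose proof (ext_len e1); simpl in *; lia.
  - f_equal; auto.
  - pose proof (ext_len e1); simpl in *; lia.
  - f_equal; auto.
Qed.

Lemma lf_len {D G} (e : LFExt D G) : clen D <= clen G.
Proof. induction e; simpl; lia. Qed.

Lemma lf_unique {D G} (e1 e2 : LFExt D G) : e1 = e2.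
Proof.
  induction e1; dependent destruction e2; auto.
  - pose proof (lf_len e2); simpl in *; lia.
  - pose proof (lf_len e1); simpl in *; lia.
  - f_equal; auto.
Qed.
Fixpoint lfApp {D G G'} (e : LFExt D G) (e' : LFExt G G') {struct e'} : LFExt D G' :=
  match e' in LFExt _ X return LFExt D X with
  | lf_nil => e
  | lf_ty A e'' => lf_ty A (lfApp e e'')
  end.

Definition extOPE {G G' G''} : OPE G' G -> LFExt G' G'' -> OPE G'' G :=
  match G return OPE G' G -> LFExt G' G'' -> OPE G'' G with
  | cnil => fun o lf => lfApp o lf
  | cext G0 A => fun o lf =>
      match o with existT _ G1 (o1, l1) => existT _ G1 (o1, lfApp l1 lf) end
  | clock G0 => fun o lf =>
      match o with existT _ G1 (o1, l1) => existT _ G1 (o1, lfApp l1 lf) end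
  end.

Fixpoint lfFactor {X G} (lf : LFExt X G) {struct lf}
  : forall G', OPE G' G -> {X' : Ctx & (OPE X' X * LFExt X' G')%type} :=
  match lf in LFExt _ Y return forall G', OPE G' Y -> {X' : Ctx & (OPE X' X * LFExt X' G')%type} with
  | lf_nil => fun G' o => existT _ G' (o, lf_nil)
  | lf_ty A lf' => fun G' o =>
      match o with existT _ G1 (o1, l1) =>
        match lfFactor lf' G1 o1 with existT _ X' (oX, lX) =>
          existT _ X' (oX, lfApp (lf_ty A lX) l1) end end
  end.

Fixpoint compOPE {G0 : Ctx} {struct G0} : forall {G1 G2}, OPE G2 G1 -> OPE G1 G0 -> OPE G2 G0 :=
  match G0 return forall G1 G2, OPE G2 G1 -> OPE G1 G0 -> OPE G2 G0 with
  | cnil => fun G1 G2 o2 o1 =>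
      match lfFactor o1 G2 o2 with existT _ X (oX, lX) => lfApp oX lX end
  | cext G0' A => fun G1 G2 o2 o1 =>
      match o1 with existT _ H (o1', l1) =>
        match lfFactor l1 G2 o2 with existT _ X (oX, lX) =>
          match oX with existT _ H' (oX', lX') =>
            existT _ H' (compOPE oX' o1', lfApp lX' lX) end end end
  | clock G0' => fun G1 G2 o2 o1 =>
      match o1 with existT _ H (o1', l1) =>
        match lfFactor l1 G2 o2 with existT _ X (oX, lX) =>
          match oX with existT _ H' (oX', lX') =>
            existT _ H' (compOPE oX' o1', lfApp lX' lX) end end end
  end.
Ltac lfu := apply lf_unique.

Lemma ope_nil_unique {G} (o o' : OPE G cnil) : o = o'.
Proof. apply lf_unique. Qed.

Ltac speq := lazymatch goal with
  | |- existT _ ?x _ = existT _ ?x _ => apply f_equal; apply f_equal2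
  end.

Lemma drop_ext {G G'} (A : Ty) (o : OPE G' G) : dropOPE A o = extOPE o (lf_ty A lf_nil).
Proof. destruct G; simpl; auto; destruct o as [G1 [o1 l1]]; reflexivity. Qed.

Lemma extOPE_nil {G G'} (o : OPE G' G) : extOPE o lf_nil = o.
Proof. destruct G; simpl; auto; destruct o as [G1 [o1 l1]]; reflexivity. Qed.

Lemma extOPE_ext {G G' G'' G'''} (o : OPE G' G) (l : LFExt G' G'') (l' : LFExt G'' G''') :
  extOPE (extOPE o l) l' = extOPE o (lfApp l l').
Proof. destruct G; simpl; try lfu; destruct o as [G1 [o1 l1]]; simpl; speq; auto; lfu. Qed.

Lemma toOPE_ext {D G} (l : LFExt D G) : toOPE l = extOPE (idOPE D) l.
Proof.
  induction l; simpl.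
  - symmetry; apply extOPE_nil.
  - rewrite IHl, drop_ext, extOPE_ext. f_equal.
Qed.

Lemma lfFactor_id {X G} (l : LFExt X G) : lfFactor l G (idOPE G) = existT _ X (idOPE X, l).
Proof. induction l; simpl; auto. rewrite IHl. reflexivity. Qed.

Lemma lfFactor_ext_ty {X G A G' G''} (l : LFExt X G) (o : OPE G' (cext G A)) (l' : LFExt G' G'') :
  lfFactor (lf_ty A l) G'' (extOPE o l') =
  match lfFactor (lf_ty A l) G' o with existT _ Y (oY, lY) => existT _ Y (oY, lfApp lY l') end.
Proof.
  destruct o as [G1 [o1 l1]]; simpl.
  destruct (lfFactor l G1 o1) as [Y [oY lY]]. speq; auto; lfu.
Qed.

Lemma lfFactor_app {X Y G G'} (l1 : LFExt X Y) (l2 : LFExt Y G) (o : OPE G' G) :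
  lfFactor (lfApp l1 l2) G' o =
  match lfFactor l2 G' o with existT _ Z (oZ, lZ) =>
    match lfFactor l1 Z oZ with existT _ W (oW, lW) => existT _ W (oW, lfApp lW lZ) end end.
Proof.
  revert G' o; induction l2; intros G' o; simpl.
  - destruct (lfFactor l1 G' o) as [W [oW lW]]; reflexivity.
  - destruct o as [G1 [o1 m1]]. rewrite IHl2.
    destruct (lfFactor l2 G1 o1) as [Z [oZ lZ]].
    destruct (lfFactor l1 Z oZ) as [W [oW lW]].
    speq; auto; lfu.
Qed.
Lemma lfFactor_comp {X G G1 G2} (l : LFExt X G) (o2 : OPE G2 G1) (o1 : OPE G1 G) :
  lfFactor l G2 (compOPE o2 o1) =
  match lfFactor l G1 o1 with existT _ X1 (p1, m1) =>
    match lfFactor m1 G2 o2 with existT _ X2 (p2, m2) =>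
      existT _ X2 (compOPE p2 p1, m2) end end.
Proof.
  revert G1 G2 o2 o1; induction l; intros G1 G2 o2 o1; simpl.
  - reflexivity.
  - destruct o1 as [H [o1' l1]]; simpl.
    destruct (lfFactor l1 G2 o2) as [Y [oY lY]] eqn:E1.
    destruct oY as [H' [oY' lY']].
    rewrite IHl.
    destruct (lfFactor l H o1') as [Z1 [p1 n1]].
    rewrite lfFactor_app, E1. simpl.
    destruct (lfFactor n1 H' oY') as [Z2 [p2 n2]].
    speq; auto; lfu.
Qed.

Lemma comp_id_l {G0 G1} (o : OPE G1 G0) : compOPE (idOPE G1) o = o.
Proof.
  revert G1 o; induction G0; intros G1 o; simpl.
  - apply lf_unique.
  - destruct o as [H [o' l]]. rewrite lfFactor_id. simpl. rewrite IHG0. speq; auto; lfu.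
  - destruct o as [H [o' l]]. rewrite lfFactor_id. simpl. rewrite IHG0. speq; auto; lfu.
Qed.

Lemma comp_id_r {G0 G2} (o : OPE G2 G0) : compOPE o (idOPE G0) = o.
Proof.
  revert G2 o; induction G0; intros G2 o; simpl.
  - apply lf_unique.
  - destruct o as [H [o' l]]. simpl. rewrite IHG0. reflexivity.
  - destruct o as [H [o' l]]. simpl. rewrite IHG0. reflexivity.
Qed.

Lemma comp_assoc {G0 G1 G2 G3} (o3 : OPE G3 G2) (o2 : OPE G2 G1) (o1 : OPE G1 G0) :
  compOPE (compOPE o3 o2) o1 = compOPE o3 (compOPE o2 o1).
Proof.
  revert G1 G2 G3 o3 o2 o1; induction G0; intros G1 G2 G3 o3 o2 o1.
  - apply lf_unique.
  - destruct o1 as [H [o1' l1]]. simpl.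
    rewrite lfFactor_comp.
    destruct (lfFactor l1 G2 o2) as [X1 [p1 m1]].
    destruct p1 as [H' [p1' q1]].
    rewrite lfFactor_app.
    destruct (lfFactor m1 G3 o3) as [X2 [p2 m2]]. simpl.
    destruct (lfFactor q1 X2 p2) as [Y [r qY]].
    destruct r as [H'' [r' q']].
    rewrite IHG0. speq; auto; lfu.
  - destruct o1 as [H [o1' l1]]. simpl.
    rewrite lfFactor_comp.
    destruct (lfFactor l1 G2 o2) as [X1 [p1 m1]].
    destruct p1 as [H' [p1' q1]].
    rewrite lfFactor_app.
    destruct (lfFactor m1 G3 o3) as [X2 [p2 m2]]. simpl.
    destruct (lfFactor q1 X2 p2) as [Y [r qY]].
    destruct r as [H'' [r' q']].
    rewrite IHG0. speq; auto; lfu.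
Qed.
Lemma comp_cext {G0 A G1 G2 H} (o2 : OPE G2 G1) (o1' : OPE H G0) (l1 : LFExt (cext H A) G1) :
  compOPE (G0 := cext G0 A) o2 (existT _ H (o1', l1)) =
  match lfFactor l1 G2 o2 with existT _ X (oX, lX) =>
    match oX with existT _ H' (oX', lX') => existT _ H' (compOPE oX' o1', lfApp lX' lX) end end.
Proof. reflexivity. Qed.

Lemma comp_clock {G0 G1 G2 H} (o2 : OPE G2 G1) (o1' : OPE H G0) (l1 : LFExt (clock H) G1) :
  compOPE (G0 := clock G0) o2 (existT _ H (o1', l1)) =
  match lfFactor l1 G2 o2 with existT _ X (oX, lX) =>
    match oX with existT _ H' (oX', lX') => existT _ H' (compOPE oX' o1', lfApp lX' lX) end end.
Proof. reflexivity. Qed.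



Lemma comp_ext_l {G0 G1 G2 G3} (o2 : OPE G2 G1) (l : LFExt G2 G3) (o1 : OPE G1 G0) :
  compOPE (extOPE o2 l) o1 = extOPE (compOPE o2 o1) l.
Proof.
  destruct G0.
  - apply lf_unique.
  - destruct o1 as [H [o1' l1]]. rewrite !comp_cext.
    destruct l1 as [|Gx B l0].
    + simpl. destruct o2 as [H' [o2' l2']]. simpl. speq; auto; lfu.
    + rewrite lfFactor_ext_ty.
      destruct (lfFactor (lf_ty B l0) G2 o2) as [X [oX lX]].
      destruct oX as [H' [oX' lX']]. simpl. speq; auto; lfu.
  - destruct o1 as [H [o1' l1]]. rewrite !comp_clock.
    destruct l1 as [|Gx B l0].
    + simpl. destruct o2 as [H' [o2' l2']]. simpl. speq; auto; lfu.
    + rewrite lfFactor_ext_ty.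
      destruct (lfFactor (lf_ty B l0) G2 o2) as [X [oX lX]].
      destruct oX as [H' [oX' lX']]. simpl. speq; auto; lfu.
Qed.

Lemma ext_cext {G0 A G1 G2 H} (o1 : OPE H G0) (l1 : LFExt (cext H A) G1) (l : LFExt G1 G2) :
  extOPE (G := cext G0 A) (existT _ H (o1, l1)) l = existT _ H (o1, lfApp l1 l).
Proof. reflexivity. Qed.
Lemma ext_clock {G0 G1 G2 H} (o1 : OPE H G0) (l1 : LFExt (clock H) G1) (l : LFExt G1 G2) :
  extOPE (G := clock G0) (existT _ H (o1, l1)) l = existT _ H (o1, lfApp l1 l).
Proof. reflexivity. Qed.

Lemma comp_ext_r {G0 G1 G1' G2} (o2 : OPE G2 G1') (o1 : OPE G1 G0) (l : LFExt G1 G1') :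
  compOPE o2 (extOPE o1 l) =
  match lfFactor l G2 o2 with existT _ X (oX, lX) => extOPE (compOPE oX o1) lX end.
Proof.
  destruct G0.
  - destruct (lfFactor l G2 o2); destruct p; apply lf_unique.
  - destruct o1 as [H [o1' l1]]. rewrite ext_cext, comp_cext, lfFactor_app.
    destruct (lfFactor l G2 o2) as [X [oX lX]].
    rewrite comp_cext.
    destruct (lfFactor l1 X oX) as [Y [oY lY]].
    destruct oY as [H' [oY' lY']]. rewrite ext_cext. speq; auto; lfu.
  - destruct o1 as [H [o1' l1]]. rewrite ext_clock, comp_clock, lfFactor_app.
    destruct (lfFactor l G2 o2) as [X [oX lX]].
    rewrite comp_clock.
    destruct (lfFactor l1 X oX) as [Y [oY lY]].
    destruct oY as [H' [oY' lY']]. rewrite ext_clock. speq; auto; lfu.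
Qed.
Lemma comp_drop_l {G0 G1 G2} A (o2 : OPE G2 G1) (o1 : OPE G1 G0) :
  compOPE (dropOPE A o2) o1 = dropOPE A (compOPE o2 o1).
Proof. rewrite !drop_ext, comp_ext_l. reflexivity. Qed.

Lemma comp_keep_dropid {G G'} A (o : OPE G' G) :
  compOPE (keepOPE A o) (dropOPE A (idOPE G)) = dropOPE A o.
Proof.
  rewrite (drop_ext A (idOPE G)), comp_ext_r. simpl.
  rewrite comp_id_r, drop_ext. f_equal; try lfu.
Qed.

Lemma comp_keep_drop {G G'} A (o : OPE G' G) :
  compOPE (keepOPE A o) (dropOPE A (idOPE G)) = compOPE (dropOPE A (idOPE G')) o.
Proof. rewrite comp_keep_dropid, comp_drop_l, comp_id_l. reflexivity. Qed.

Lemma toOPE_app {X Y Z} (l1 : LFExt X Y) (l2 : LFExt Y Z) :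
  compOPE (toOPE l2) (toOPE l1) = toOPE (lfApp l1 l2).
Proof.
  rewrite !toOPE_ext, comp_ext_l, comp_id_l, extOPE_ext. reflexivity.
Qed.

Lemma SQ {X G G'} (l : LFExt X G) (o : OPE G' G) :
  compOPE o (toOPE l) =
  match lfFactor l G' o with existT _ Y (oY, lY) => compOPE (toOPE lY) oY end.
Proof.
  rewrite toOPE_ext, comp_ext_r. destruct (lfFactor l G' o) as [Y [oY lY]].
  rewrite comp_id_r, toOPE_ext, comp_ext_l, comp_id_l. reflexivity.
Qed.

Lemma fo_ty {D G0 A G' H} (e : Ext D G0) (o1 : OPE H G0) (l1 : LFExt (cext H A) G') :
  factorOPE (ext_ty A e) G' (existT _ H (o1, l1)) =
  match factorOPE e H o1 with existT _ D' (o2, e2) =>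
    existT _ D' (o2, extApp e2 (extApp (ext_ty A ext_nil) (lfToExt l1))) end.
Proof. reflexivity. Qed.

Lemma fo_lk {D G0 G' H} (e : Ext D G0) (o1 : OPE H G0) (l1 : LFExt (clock H) G') :
  factorOPE (ext_lk e) G' (existT _ H (o1, l1)) =
  match factorOPE e H o1 with existT _ D' (o2, e2) =>
    existT _ D' (o2, extApp e2 (extApp (ext_lk ext_nil) (lfToExt l1))) end.
Proof. reflexivity. Qed.

Ltac eu := apply ext_unique.

Lemma FO_id {D G} (e : Ext D G) : factorOPE e G (idOPE G) = existT _ D (idOPE D, e).
Proof.
  induction e; simpl.
  - reflexivity.
  - rewrite IHe. speq; auto; eu.
  - rewrite IHe. speq; auto; eu.
Qed.

Lemma FO_app {D G G' G''} (e : Ext D G) (e' : Ext G G') (o : OPE G'' G') :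
  factorOPE (extApp e e') G'' o =
  match factorOPE e' G'' o with existT _ D1 (o1, e1) =>
    match factorOPE e D1 o1 with existT _ D2 (o2, e2) => existT _ D2 (o2, extApp e2 e1) end end.
Proof.
  revert G'' o; induction e'; intros G'' o.
  - simpl. destruct (factorOPE e G'' o) as [D2 [o2 e2]]; reflexivity.
  - destruct o as [H [o1 l1]]. simpl extApp. rewrite !fo_ty, IHe'.
    destruct (factorOPE e' H o1) as [D1 [p1 e1]].
    destruct (factorOPE e D1 p1) as [D2 [p2 e2]]. speq; auto; eu.
  - destruct o as [H [o1 l1]]. simpl extApp. rewrite !fo_lk, IHe'.
    destruct (factorOPE e' H o1) as [D1 [p1 e1]].
    destruct (factorOPE e D1 p1) as [D2 [p2 e2]]. speq; auto; eu.
Qed.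

Lemma FO_lf {X G G'} (l : LFExt X G) (o : OPE G' G) :
  factorOPE (lfToExt l) G' o =
  match lfFactor l G' o with existT _ Y (oY, lY) => existT _ Y (oY, lfToExt lY) end.
Proof.
  revert G' o; induction l; intros G' o.
  - reflexivity.
  - destruct o as [H [o1 l1]]. simpl lfToExt. rewrite fo_ty, IHl. simpl.
    destruct (lfFactor l H o1) as [Y [oY lY]]. speq; auto; eu.
Qed.

Lemma FO_comp {D G G1 G2} (e : Ext D G) (o2 : OPE G2 G1) (o1 : OPE G1 G) :
  factorOPE e G2 (compOPE o2 o1) =
  match factorOPE e G1 o1 with existT _ D1 (p1, e1) =>
    match factorOPE e1 G2 o2 with existT _ D2 (p2, e2) => existT _ D2 (compOPE p2 p1, e2) end end.
Proof.
  revert G1 G2 o2 o1; induction e; intros G1 G2 o2 o1.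
  - reflexivity.
  - destruct o1 as [H [o1' l1]]. rewrite comp_cext.
    destruct (lfFactor l1 G2 o2) as [X [oX lX]] eqn:E1.
    destruct oX as [H' [oX' lX']].
    rewrite !fo_ty, IHe.
    destruct (factorOPE e H o1') as [D1 [p1 e1]].
    replace (extApp e1 (extApp (ext_ty A ext_nil) (lfToExt l1)))
      with (extApp e1 (lfToExt (lfApp (lf_ty A lf_nil) l1))) by eu.
    rewrite FO_app, FO_lf, lfFactor_app, E1. simpl.
    destruct (factorOPE e1 H' oX') as [D2 [p2 e2]]. speq; auto; eu.
  - destruct o1 as [H [o1' l1]]. rewrite comp_clock.
    destruct (lfFactor l1 G2 o2) as [X [oX lX]] eqn:E1.
    destruct oX as [H' [oX' lX']].
    rewrite !fo_lk, IHe.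
    destruct (factorOPE e H o1') as [D1 [p1 e1]].
    rewrite FO_app, FO_app, FO_lf, E1. simpl.
    destruct (factorOPE e1 H' oX') as [D2 [p2 e2]]. speq; auto; eu.
Qed.
Lemma lfVar_app {X Y Z A} (l1 : LFExt X Y) (l2 : LFExt Y Z) (v : Var X A) :
  lfVar (lfApp l1 l2) v = lfVar l2 (lfVar l1 v).
Proof. induction l2; simpl; auto. rewrite IHl2; auto. Qed.

Lemma LV {X G G' A} (l : LFExt X G) (v : Var X A) (o : OPE G' G) :
  wkVar (lfVar l v) G' o =
  match lfFactor l G' o with existT _ Y (oY, lY) => lfVar lY (wkVar v Y oY) end.
Proof.
  revert G' o; induction l; intros G' o; simpl.
  - reflexivity.
  - destruct o as [H [o1 l1]]. simpl. rewrite IHl.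
    destruct (lfFactor l H o1) as [Y [oY lY]]. rewrite lfVar_app. reflexivity.
Qed.

Lemma wkVar_id {G A} (v : Var G A) : wkVar v G (idOPE G) = v.
Proof. induction v; simpl; auto. rewrite IHv; auto. Qed.

Lemma wkVar_comp {G G1 G2 A} (v : Var G A) (o1 : OPE G1 G) (o2 : OPE G2 G1) :
  wkVar (wkVar v G1 o1) G2 o2 = wkVar v G2 (compOPE o2 o1).
Proof.
  revert G1 G2 o1 o2; induction v; intros G1 G2 o1 o2.
  - destruct o1 as [H [o1' l1]]. rewrite comp_cext. simpl. rewrite LV.
    destruct (lfFactor l1 G2 o2) as [X [oX lX]].
    destruct oX as [H' [oX' lX']]. simpl. rewrite lfVar_app. reflexivity.
  - destruct o1 as [H [o1' l1]]. rewrite comp_cext. simpl. rewrite LV.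
    destruct (lfFactor l1 G2 o2) as [X [oX lX]].
    destruct oX as [H' [oX' lX']]. simpl. rewrite lfVar_app, IHv. reflexivity.
Qed.

Lemma comp_keep {G G1 G2} A (o2 : OPE G2 G1) (o1 : OPE G1 G) :
  compOPE (keepOPE A o2) (keepOPE A o1) = keepOPE A (compOPE o2 o1).
Proof. reflexivity. Qed.

Lemma comp_keepLock {G G1 G2} (o2 : OPE G2 G1) (o1 : OPE G1 G) :
  compOPE (keepLockOPE o2) (keepLockOPE o1) = keepLockOPE (compOPE o2 o1).
Proof. reflexivity. Qed.

Lemma wk_id {G A} (t : Tm G A) : wk t G (idOPE G) = t.
Proof.
  induction t; simpl.
  - rewrite wkVar_id; auto.
  - change (keepOPE A (idOPE G)) with (idOPE (cext G A)). rewrite IHt; auto.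
  - rewrite IHt1, IHt2; auto.
  - change (keepLockOPE (idOPE G)) with (idOPE (clock G)). rewrite IHt; auto.
  - rewrite FO_id, IHt. reflexivity.
Qed.

Lemma wk_comp {G G1 G2 A} (t : Tm G A) (o1 : OPE G1 G) (o2 : OPE G2 G1) :
  wk (wk t G1 o1) G2 o2 = wk t G2 (compOPE o2 o1).
Proof.
  revert G1 G2 o1 o2; induction t; intros G1 G2 o1 o2; simpl.
  - rewrite wkVar_comp; auto.
  - rewrite IHt; auto.
  - rewrite IHt1, IHt2; auto.
  - rewrite IHt; auto.
  - rewrite FO_comp. destruct (factorOPE e G1 o1) as [D1 [p1 e1]]. simpl.
    destruct (factorOPE e1 G2 o2) as [D2 [p2 e2]]. rewrite IHt. reflexivity.
Qed.

Lemma wkSub_id {D G} (s : Sub G D) : wkSub D G G (idOPE G) s = s.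
Proof.
  revert G s; induction D; intros G s; simpl.
  - destruct s; auto.
  - destruct s as [s u]; simpl. rewrite IHD, wk_id; auto.
  - destruct s as [G1 [s1 e1]]. rewrite FO_id, IHD. reflexivity.
Qed.

Lemma wkSub_comp {D G G1 G2} (s : Sub G D) (o1 : OPE G1 G) (o2 : OPE G2 G1) :
  wkSub D G1 G2 o2 (wkSub D G G1 o1 s) = wkSub D G G2 (compOPE o2 o1) s.
Proof.
  revert G G1 G2 s o1 o2; induction D; intros G G1 G2 s o1 o2; simpl.
  - auto.
  - rewrite IHD, wk_comp; auto.
  - destruct s as [H [s1 e1]]. rewrite FO_comp.
    destruct (factorOPE e1 G1 o1) as [D1 [p1 q1]]. simpl.
    destruct (factorOPE q1 G2 o2) as [D2 [p2 q2]]. rewrite IHD. reflexivity.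
Qed.
Fixpoint lfDrop {X G} (l : LFExt X G) {struct l} : forall Γ, Sub Γ G -> Sub Γ X :=
  match l in LFExt _ Y return forall Γ, Sub Γ Y -> Sub Γ X with
  | lf_nil => fun Γ s => s
  | lf_ty A l' => fun Γ s => lfDrop l' Γ (fst s)
  end.

Fixpoint res (D : Ctx) {struct D} : forall D' Γ, OPE D' D -> Sub Γ D' -> Sub Γ D :=
  match D return forall D' Γ, OPE D' D -> Sub Γ D' -> Sub Γ D with
  | cnil => fun _ _ _ _ => tt
  | cext D0 A => fun D' Γ o s =>
      match o with existT _ G1 (o1, l) =>
        (res D0 G1 Γ o1 (fst (lfDrop l Γ s)), snd (lfDrop l Γ s)) end
  | clock D0 => fun D' Γ o s =>
      match o with existT _ G1 (o1, l) =>
        match lfDrop l Γ s with existT _ G' (s', e') => existT _ G' (res D0 G1 G' o1 s', e') end end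
  end.

Fixpoint compSub (Θ : Ctx) {struct Θ} : forall D Γ, Sub D Θ -> Sub Γ D -> Sub Γ Θ :=
  match Θ return forall D Γ, Sub D Θ -> Sub Γ D -> Sub Γ Θ with
  | cnil => fun _ _ _ _ => tt
  | cext Θ0 A => fun D Γ s τ => (compSub Θ0 D Γ (fst s) τ, subst (snd s) Γ τ)
  | clock Θ0 => fun D Γ s τ =>
      match s with existT _ G1 (s1, e1) =>
        match factorSub e1 Γ τ with existT _ G2 (τ2, e2) =>
          existT _ G2 (compSub Θ0 G1 G2 s1 τ2, e2) end end
  end.

Lemma FS_app {D G G' Γ} (e1 : Ext D G) (e2 : Ext G G') (s : Sub Γ G') :
  factorSub (extApp e1 e2) Γ s =
  match factorSub e2 Γ s with existT _ G1 (s1, x1) =>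
    match factorSub e1 G1 s1 with existT _ G2 (s2, x2) => existT _ G2 (s2, extApp x2 x1) end end.
Proof.
  revert Γ s; induction e2; intros Γ s; simpl.
  - destruct (factorSub e1 Γ s) as [G2 [s2 x2]]; reflexivity.
  - apply IHe2.
  - destruct s as [G1 [s1 x1]]. rewrite IHe2.
    destruct (factorSub e2 G1 s1) as [G3 [s3 x3]]. simpl.
    destruct (factorSub e1 G3 s3) as [G4 [s4 x4]]. speq; auto; eu.
Qed.

Lemma FS_lf {X G Γ} (l : LFExt X G) (s : Sub Γ G) :
  factorSub (lfToExt l) Γ s = existT _ Γ (lfDrop l Γ s, ext_nil).
Proof. revert Γ s; induction l; intros Γ s; simpl; auto. Qed.

Lemma lfDrop_app {X Y Z Γ} (l1 : LFExt X Y) (l2 : LFExt Y Z) (s : Sub Γ Z) :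
  lfDrop (lfApp l1 l2) Γ s = lfDrop l1 Γ (lfDrop l2 Γ s).
Proof. revert Γ s; induction l2; intros Γ s; simpl; auto. Qed.

Lemma lfDrop_wk {X G Γ Γ'} (l : LFExt X G) (s : Sub Γ G) (o : OPE Γ' Γ) :
  lfDrop l Γ' (wkSub G Γ Γ' o s) = wkSub X Γ Γ' o (lfDrop l Γ s).
Proof. revert s; induction l; intros s; simpl; auto. Qed.

Lemma FS_wk {D G Γ Γ'} (e : Ext D G) (s : Sub Γ G) (o : OPE Γ' Γ) :
  factorSub e Γ' (wkSub G Γ Γ' o s) =
  match factorSub e Γ s with existT _ G1 (s1, e1) =>
    match factorOPE e1 Γ' o with existT _ G2 (o2, e2) => existT _ G2 (wkSub D G1 G2 o2 s1, e2) end end.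
Proof.
  revert Γ Γ' s o; induction e; intros Γ Γ' s o; simpl.
  - reflexivity.
  - apply IHe.
  - destruct s as [G1 [s1 e1]].
    destruct (factorOPE e1 Γ' o) as [G2 [o2 e2]] eqn:E1. simpl.
    rewrite IHe.
    destruct (factorSub e G1 s1) as [G3 [s3 e3]].
    rewrite FO_app, E1.
    destruct (factorOPE e3 G2 o2) as [G4 [o4 e4]]. reflexivity.
Qed.

Lemma res_id {D Γ} (s : Sub Γ D) : res D D Γ (idOPE D) s = s.
Proof.
  revert Γ s; induction D; intros Γ s; simpl.
  - destruct s; auto.
  - destruct s; simpl; rewrite IHD; auto.
  - destruct s as [G' [s' e']]. rewrite IHD. reflexivity.
Qed.

Lemma res_ext {D D' D'' Γ} (o : OPE D' D) (l : LFExt D' D'') (s : Sub Γ D'') :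
  res D D'' Γ (extOPE o l) s = res D D' Γ o (lfDrop l Γ s).
Proof.
  destruct D; simpl.
  - reflexivity.
  - destruct o as [G1 [o1 l1]]. simpl. rewrite lfDrop_app. reflexivity.
  - destruct o as [G1 [o1 l1]]. simpl. rewrite lfDrop_app. reflexivity.
Qed.

Lemma RW {D D' Γ Γ'} (o : OPE D' D) (s : Sub Γ D') (o' : OPE Γ' Γ) :
  wkSub D Γ Γ' o' (res D D' Γ o s) = res D D' Γ' o (wkSub D' Γ Γ' o' s).
Proof.
  revert D' Γ Γ' o s o'; induction D; intros D' Γ Γ' o s o'; simpl.
  - reflexivity.
  - destruct o as [G1 [o1 l1]]. simpl. rewrite lfDrop_wk. simpl. rewrite IHD. reflexivity.
  - destruct o as [G1 [o1 l1]]. rewrite lfDrop_wk.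
    destruct (lfDrop l1 Γ s) as [G' [s' e']]. simpl.
    destruct (factorOPE e' Γ' o') as [G2 [o2 e2]]. rewrite IHD. reflexivity.
Qed.

Lemma FS_res {D G D' Γ} (e : Ext D G) (o : OPE D' G) (s : Sub Γ D') :
  factorSub e Γ (res G D' Γ o s) =
  match factorOPE e D' o with existT _ X (o', e') =>
    match factorSub e' Γ s with existT _ G' (s', e'') => existT _ G' (res D X G' o' s', e'') end end.
Proof.
  revert D' Γ o s; induction e; intros D' Γ o s.
  - simpl. destruct (factorSub ext_nil Γ s) eqn:E. simpl in E. inversion E. reflexivity.
  - destruct o as [G1 [o1 l1]]. rewrite fo_ty. simpl factorSub at 1.
    rewrite IHe.
    destruct (factorOPE e G1 o1) as [X [o' e']].
    replace (extApp e' (extApp (ext_ty A ext_nil) (lfToExt l1)))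
      with (extApp e' (lfToExt (lfApp (lf_ty A lf_nil) l1))) by eu.
    rewrite FS_app, FS_lf, lfDrop_app. simpl.
    destruct (factorSub e' Γ (fst (lfDrop l1 Γ s))) as [G' [s' e'']]. speq; auto; eu.
  - destruct o as [G1 [o1 l1]]. rewrite fo_lk.
    simpl res. destruct (lfDrop l1 Γ s) as [G' [s' e']] eqn:E. simpl.
    rewrite IHe.
    destruct (factorOPE e G1 o1) as [X [o2 e2]].
    rewrite FS_app, FS_app, FS_lf, E. simpl.
    destruct (factorSub e2 G' s') as [G3 [s3 e3]]. speq; auto; eu.
Qed.
Lemma substVar_lf {X G Γ A} (l : LFExt X G) (v : Var X A) (s : Sub Γ G) :
  substVar (lfVar l v) Γ s = substVar v Γ (lfDrop l Γ s).
Proof. revert s; induction l; intros s; simpl; auto. Qed.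

Lemma substVar_wk {D D' Γ A} (v : Var D A) (o : OPE D' D) (s : Sub Γ D') :
  substVar (wkVar v D' o) Γ s = substVar v Γ (res D D' Γ o s).
Proof.
  revert D' o s; induction v; intros D' o s; destruct o as [G1 [o1 l1]]; simpl;
    rewrite substVar_lf; simpl; auto.
Qed.

Lemma S2 {D D' Γ A} (t : Tm D A) (o : OPE D' D) (s : Sub Γ D') :
  subst (wk t D' o) Γ s = subst t Γ (res D D' Γ o s).
Proof.
  revert D' Γ o s; induction t; intros D' Γ o s; simpl.
  - apply substVar_wk.
  - rewrite IHt. simpl. rewrite RW. reflexivity.
  - rewrite IHt1, IHt2; auto.
  - rewrite IHt. reflexivity.
  - rewrite FS_res. destruct (factorOPE e D' o) as [X [o' e']]. simpl.
    destruct (factorSub e' Γ s) as [G' [s' e'']]. rewrite IHt. reflexivity.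
Qed.

Lemma substVar_wkSub {D Γ Γ' A} (v : Var D A) (s : Sub Γ D) (o : OPE Γ' Γ) :
  substVar v Γ' (wkSub D Γ Γ' o s) = wk (substVar v Γ s) Γ' o.
Proof. revert s; induction v; intros s; simpl; auto. Qed.

Lemma S1 {D Γ Γ' A} (t : Tm D A) (s : Sub Γ D) (o : OPE Γ' Γ) :
  wk (subst t Γ s) Γ' o = subst t Γ' (wkSub D Γ Γ' o s).
Proof.
  revert Γ Γ' s o; induction t; intros Γ Γ' s o; simpl.
  - rewrite substVar_wkSub; auto.
  - rewrite IHt. simpl. rewrite !wkSub_comp, comp_keep_drop. reflexivity.
  - rewrite IHt1, IHt2; auto.
  - rewrite IHt. reflexivity.
  - rewrite FS_wk. destruct (factorSub e Γ s) as [G1 [s1 e1]]. simpl.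
    destruct (factorOPE e1 Γ' o) as [G2 [o2 e2]]. rewrite IHt. reflexivity.
Qed.

Lemma FS_comp {D G Δ Γ} (e : Ext D G) (s : Sub Δ G) (τ : Sub Γ Δ) :
  factorSub e Γ (compSub G Δ Γ s τ) =
  match factorSub e Δ s with existT _ G1 (s1, e1) =>
    match factorSub e1 Γ τ with existT _ G2 (τ2, e2) => existT _ G2 (compSub D G1 G2 s1 τ2, e2) end end.
Proof.
  revert Δ Γ s τ; induction e; intros Δ Γ s τ; simpl.
  - reflexivity.
  - apply IHe.
  - destruct s as [G1 [s1 e1]].
    destruct (factorSub e1 Γ τ) as [G2 [τ2 e2]] eqn:E1. simpl.
    rewrite IHe.
    destruct (factorSub e G1 s1) as [G3 [s3 e3]].
    rewrite FS_app, E1.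
    destruct (factorSub e3 G2 τ2) as [G4 [τ4 e4]]. reflexivity.
Qed.

Lemma C_wk {Θ D D' Γ} (s : Sub D Θ) (o : OPE D' D) (τ : Sub Γ D') :
  compSub Θ D' Γ (wkSub Θ D D' o s) τ = compSub Θ D Γ s (res D D' Γ o τ).
Proof.
  revert D D' Γ s o τ; induction Θ; intros D D' Γ s o τ; simpl.
  - reflexivity.
  - rewrite IHΘ, S2. reflexivity.
  - destruct s as [G1 [s1 e1]].
    rewrite FS_res.
    destruct (factorOPE e1 D' o) as [G2 [o2 e2]]. simpl.
    destruct (factorSub e2 Γ τ) as [G3 [τ3 e3]]. rewrite IHΘ. reflexivity.
Qed.

Lemma C_wk2 {Θ D Γ Γ'} (s : Sub D Θ) (τ : Sub Γ D) (o : OPE Γ' Γ) :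
  compSub Θ D Γ' s (wkSub D Γ Γ' o τ) = wkSub Θ Γ Γ' o (compSub Θ D Γ s τ).
Proof.
  revert D Γ Γ' s τ o; induction Θ; intros D Γ Γ' s τ o; simpl.
  - reflexivity.
  - rewrite IHΘ, S1. reflexivity.
  - destruct s as [G1 [s1 e1]].
    rewrite FS_wk.
    destruct (factorSub e1 Γ τ) as [G2 [τ2 e2]]. simpl.
    destruct (factorOPE e2 Γ' o) as [G3 [o3 e3]]. rewrite IHΘ. reflexivity.
Qed.

Lemma res_drop {D Γ A} (τ : Sub Γ D) (w : Tm Γ A) :
  res D (cext D A) Γ (dropOPE A (idOPE D)) ((τ, w) : Sub Γ (cext D A)) = τ.
Proof. rewrite drop_ext, res_ext. simpl. apply res_id. Qed.

Lemma S4 {D Δ Γ A} (t : Tm D A) (s : Sub Δ D) (τ : Sub Γ Δ) :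
  subst (subst t Δ s) Γ τ = subst t Γ (compSub D Δ Γ s τ).
Proof.
  revert Δ Γ s τ; induction t; intros Δ Γ s τ; simpl.
  - induction v; simpl; auto.
  - rewrite IHt. simpl. rewrite C_wk, res_drop, C_wk2. reflexivity.
  - rewrite IHt1, IHt2; auto.
  - rewrite IHt. reflexivity.
  - rewrite FS_comp. destruct (factorSub e Δ s) as [G1 [s1 e1]]. simpl.
    destruct (factorSub e1 Γ τ) as [G2 [τ2 e2]]. rewrite IHt. reflexivity.
Qed.
Lemma LDI {X G} (l : LFExt X G) :
  lfDrop l G (idSub G) = wkSub X X G (toOPE l) (idSub X).
Proof.
  induction l; simpl.
  - rewrite wkSub_id; auto.
  - rewrite lfDrop_wk, IHl, wkSub_comp, comp_drop_l, comp_id_l. reflexivity.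
Qed.

Lemma ORES {G0 G1 G' A} (o1 : OPE G1 G0) (l : LFExt (cext G1 A) G') :
  compOPE (G0 := G0) (existT _ G1 (o1, l) : OPE G' (cext G0 A)) (dropOPE A (idOPE G0)) =
  compOPE (compOPE (toOPE l) (dropOPE A (idOPE G1))) o1.
Proof.
  rewrite (drop_ext A (idOPE G0)), comp_ext_r. simpl.
  rewrite comp_id_r, toOPE_ext, comp_ext_l, comp_id_l, (drop_ext A (idOPE G1)), extOPE_ext,
    comp_ext_l, comp_id_l. f_equal; try lfu.
Qed.

Lemma RW0 {G G'} (o : OPE G' G) : wkSub G G G' o (idSub G) = res G G' G' o (idSub G').
Proof.
  revert G' o; induction G; intros G' o; simpl.
  - reflexivity.
  - rewrite wkSub_comp. destruct o as [G1 [o1 l]]. rewrite LDI. simpl.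
    rewrite (wkSub_comp (D:=G1) (idSub G1) (dropOPE t (idOPE G1)) (toOPE l)).
    rewrite <- RW, <- (IHG G1 o1), wkSub_comp, ORES.
    rewrite toOPE_ext. simpl. replace (lfApp lf_nil l) with l by lfu. reflexivity.
  - destruct o as [G1 [o1 l]]. rewrite LDI, toOPE_ext. simpl.
    rewrite wkSub_id, IHG. speq; auto; eu.
Qed.

Lemma FO_toOPE_ty {D G A G'} (e : Ext D G) (l : LFExt (cext G A) G') :
  factorOPE (ext_ty A e) G' (toOPE l) = existT _ D (idOPE D, extApp (ext_ty A e) (lfToExt l)).
Proof. rewrite toOPE_ext. simpl. rewrite FO_id. speq; auto; eu. Qed.

Lemma FO_toOPE_lk {D G G'} (e : Ext D G) (l : LFExt (clock G) G') :
  factorOPE (ext_lk e) G' (toOPE l) = existT _ D (idOPE D, extApp (ext_lk e) (lfToExt l)).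
Proof. rewrite toOPE_ext. simpl. rewrite FO_id. speq; auto; eu. Qed.

Lemma drop_id_toOPE {G} A : dropOPE A (idOPE G) = toOPE (lf_ty A (@lf_nil G)).
Proof. reflexivity. Qed.

Lemma FI {D G} (e : Ext D G) : exists G'' (l : LFExt D G'') (e'' : Ext G'' G),
  factorSub e G (idSub G) = existT _ G'' (wkSub D D G'' (toOPE l) (idSub D), e'').
Proof.
  induction e.
  - exists D, lf_nil, ext_nil. simpl. rewrite wkSub_id. reflexivity.
  - destruct IHe as [G'' [l [e'' Heq]]]. simpl. rewrite FS_wk, Heq. clear Heq.
    revert e. destruct e''; intros e0.
    + exists (cext G'' A), (lf_ty A l), ext_nil. simpl.
      rewrite wkSub_comp, comp_drop_l, comp_id_l. reflexivity.
    + rewrite drop_id_toOPE, FO_toOPE_ty, wkSub_id. eexists _, l, _. reflexivity.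
    + rewrite drop_id_toOPE, FO_toOPE_lk, wkSub_id. eexists _, l, _. reflexivity.
  - destruct IHe as [G'' [l [e'' Heq]]]. simpl. rewrite Heq.
    eexists _, l, _. reflexivity.
Qed.

Lemma wk_conv {G A} (t u : Tm G A) : conv t u -> forall G' (o : OPE G' G), conv (wk t G' o) (wk u G' o).
Proof.
  intros H; induction H; intros G' o.
  - apply cv_refl.
  - apply cv_sym; auto.
  - eapply cv_trans; eauto.
  - simpl. apply cv_lam; auto.
  - simpl. apply cv_app; auto.
  - simpl. apply cv_box; auto.
  - simpl. destruct (factorOPE e G' o) as [D' [o' e']]. apply cv_unbox; auto.
  - simpl. eapply cv_trans; [apply cv_beta_fun|].
    rewrite S2, S1. simpl. rewrite RW0. apply cv_refl.
  - simpl. eapply cv_trans; [apply cv_eta_fun|].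
    rewrite !wk_comp, comp_keep_drop. apply cv_refl.
  - simpl. rewrite S1. simpl. destruct (factorOPE e G' o) as [D' [o' e']].
    eapply cv_trans; [apply cv_beta_box|]. rewrite S2. simpl. rewrite RW0. apply cv_refl.
  - simpl. apply cv_eta_box.
  - simpl. rewrite FO_app. destruct (factorOPE e' G' o) as [D1 [o1 e1]].
    rewrite FO_lf. rewrite wk_comp, SQ. destruct (lfFactor e D1 o1) as [X [oX lX]].
    eapply cv_trans; [apply cv_wk|]. rewrite wk_comp. apply cv_refl.
Qed.
Fixpoint SubEq (D : Ctx) {struct D} : forall Γ, Sub Γ D -> Sub Γ D -> Prop :=
  match D return forall Γ, Sub Γ D -> Sub Γ D -> Prop with
  | cnil => fun _ _ _ => True
  | cext D0 A => fun Γ s s' => SubEq D0 Γ (fst s) (fst s') /\ conv (snd s) (snd s')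
  | clock D0 => fun Γ s s' =>
      match s, s' with existT _ G1 (s1, _), existT _ G2 (s2, _) =>
        exists l : LFExt G2 G1, SubEq D0 G1 s1 (wkSub D0 G2 G1 (toOPE l) s2) end
  end.

Lemma E4 {D Γ Γ'} (s s' : Sub Γ D) (o : OPE Γ' Γ) :
  SubEq D Γ s s' -> SubEq D Γ' (wkSub D Γ Γ' o s) (wkSub D Γ Γ' o s').
Proof.
  revert Γ Γ' s s' o; induction D; intros Γ Γ' s s' o H; simpl in *.
  - auto.
  - destruct H; split; auto. apply wk_conv; auto.
  - destruct s as [G1 [s1 e1]]. destruct s' as [G2 [s2 e2]]. destruct H as [l H].
    rewrite (ext_unique e2 (extApp (lfToExt l) e1)), FO_app.
    destruct (factorOPE e1 Γ' o) as [G3 [o3 e3]]. rewrite FO_lf.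
    pose proof (SQ l o3) as Hsq.
    destruct (lfFactor l G3 o3) as [X [oX lX]]. simpl.
    exists lX. rewrite wkSub_comp, <- Hsq, <- wkSub_comp. apply IHD; auto.
Qed.

Lemma FO_toOPE_gen {D G G'} (e : Ext D G) (l : LFExt G G') :
  match factorOPE e G' (toOPE l) with existT _ D' (o', _) => exists m : LFExt D D', o' = toOPE m end.
Proof.
  destruct e.
  - simpl. exists l. reflexivity.
  - rewrite FO_toOPE_ty. exists lf_nil. reflexivity.
  - rewrite FO_toOPE_lk. exists lf_nil. reflexivity.
Qed.

Lemma E5 {D Δ Γ} (e : Ext D Δ) (s s' : Sub Γ Δ) : SubEq Δ Γ s s' ->
  match factorSub e Γ s, factorSub e Γ s' with
  | existT _ G1 (s1, _), existT _ G2 (s2, _) => exists l : LFExt G2 G1, SubEq D G1 s1 (wkSub D G2 G1 (toOPE l) s2)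
  end.
Proof.
  revert Γ s s'; induction e; intros Γ s s' H; simpl in *.
  - exists lf_nil. simpl. rewrite wkSub_id. auto.
  - apply IHe. apply H.
  - destruct s as [G1 [s1 e1]]. destruct s' as [G2 [s2 e2]]. destruct H as [l H].
    pose proof (IHe _ _ _ H) as IH. rewrite FS_wk in IH.
    destruct (factorSub e G1 s1) as [G3 [s3 e3]].
    destruct (factorSub e G2 s2) as [G4 [s4 e4]].
    pose proof (FO_toOPE_gen e4 l) as Hg.
    destruct (factorOPE e4 G1 (toOPE l)) as [G5 [o5 e5]].
    destruct Hg as [m Hm]. subst o5. destruct IH as [l' IH].
    exists (lfApp m l'). rewrite <- toOPE_app, <- wkSub_comp. auto.
Qed.

Lemma E1 {D Γ A} (t : Tm D A) (s s' : Sub Γ D) : SubEq D Γ s s' -> conv (subst t Γ s) (subst t Γ s').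
Proof.
  revert Γ s s'; induction t; intros Γ s s' H; simpl.
  - induction v; simpl in *.
    + apply H.
    + apply IHv. apply H.
  - apply cv_lam. apply IHt. simpl. split; [apply E4; auto | apply cv_refl].
  - apply cv_app; auto.
  - apply cv_box. apply IHt. simpl. exists lf_nil. simpl. rewrite wkSub_id. auto.
  - pose proof (E5 e s s' H) as H5.
    destruct (factorSub e Γ s) as [G1 [s1 e1]].
    destruct (factorSub e Γ s') as [G2 [s2 e2]].
    destruct H5 as [l H5].
    rewrite (ext_unique e2 (extApp (lfToExt l) e1)).
    eapply cv_trans; [| apply cv_sym; apply cv_wk].
    rewrite S1. apply cv_unbox. apply IHt. auto.
Qed.

Lemma wkVar_drop {G A} B (v : Var G A) : wkVar v (cext G B) (dropOPE B (idOPE G)) = vs B v.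
Proof. destruct v; simpl; auto. rewrite wkVar_id. auto. Qed.

Lemma substVar_id {G A} (v : Var G A) : substVar v G (idSub G) = var v.
Proof.
  induction v; simpl; auto.
  rewrite substVar_wkSub, IHv. simpl. rewrite wkVar_drop. auto.
Qed.

Lemma E3 {G G' A} (t : Tm G A) (o : OPE G' G) :
  conv (subst t G' (res G G' G' o (idSub G'))) (wk t G' o).
Proof.
  revert G' o; induction t; intros G' o; simpl.
  - rewrite <- substVar_wk, substVar_id. apply cv_refl.
  - apply cv_lam. rewrite RW. apply (IHt _ (keepOPE A o)).
  - apply cv_app; auto.
  - apply cv_box. apply (IHt _ (keepLockOPE o)).
  - rewrite FS_res. destruct (factorOPE e G' o) as [D' [o' e']].
    destruct (FI e') as [G'' [l [e'' Hfi]]]. rewrite Hfi.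
    rewrite <- RW, <- S1.
    rewrite (ext_unique e' (extApp (lfToExt l) e'')).
    eapply cv_trans; [| apply cv_sym; apply cv_wk].
    apply cv_unbox. apply wk_conv. apply IHt.
Qed.

Lemma E2 {Θ D Γ} (s : Sub D Θ) (o : OPE Γ D) :
  SubEq Θ Γ (compSub Θ D Γ s (res D Γ Γ o (idSub Γ))) (wkSub Θ D Γ o s).
Proof.
  revert D Γ s o; induction Θ; intros D Γ s o; simpl.
  - auto.
  - split; auto. apply E3.
  - destruct s as [G1 [s1 e1]].
    rewrite FS_res. destruct (factorOPE e1 Γ o) as [D' [o' e']].
    destruct (FI e') as [G'' [l [e'' Hfi]]]. rewrite Hfi.
    exists l. rewrite <- RW, C_wk2. apply E4. apply IHΘ.
Qed.

Lemma sig_ext {A : Type} {P : A -> Prop} (x y : sig P) : proj1_sig x = proj1_sig y -> x = y.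
Proof. destruct x, y; simpl; intros; subst. f_equal. apply proof_irrelevance. Qed.

Record Psh : Type := mkPsh {
  PF : Ctx -> Type;
  pact : forall {Γ Γ'}, OPE Γ' Γ -> PF Γ -> PF Γ';
  pact_id : forall Γ x, pact (idOPE Γ) x = x;
  pact_comp : forall Γ Γ' Γ'' (o1 : OPE Γ' Γ) (o2 : OPE Γ'' Γ') x,
      pact (compOPE o2 o1) x = pact o2 (pact o1 x) }.
Arguments pact {p Γ Γ'} o x.

Definition PHom (P Q : Psh) : Type :=
  { f : forall Γ, PF P Γ -> PF Q Γ | forall Γ Γ' (o : OPE Γ' Γ) x, f Γ' (pact o x) = pact o (f Γ x) }.

Definition ap {P Q} (f : PHom P Q) {Γ} (x : PF P Γ) : PF Q Γ := proj1_sig f Γ x.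

Lemma ap_nat {P Q} (f : PHom P Q) {Γ Γ'} (o : OPE Γ' Γ) x : ap f (pact o x) = pact o (ap f x).
Proof. apply (proj2_sig f). Qed.

Lemma hom_ext {P Q} (f g : PHom P Q) : (forall Γ x, ap f (Γ := Γ) x = ap g x) -> f = g.
Proof.
  intros H. apply sig_ext. apply functional_extensionality_dep; intros Γ.
  apply functional_extensionality; intros x. apply H.
Qed.

Definition Pid (P : Psh) : PHom P P.
Proof. refine (exist _ (fun Γ x => x) _). abstract (intros; reflexivity). Defined.

Definition Pcomp {P Q R : Psh} (g : PHom Q R) (f : PHom P Q) : PHom P R.
Proof.
  refine (exist _ (fun Γ x => ap g (ap f x)) _).
  abstract (intros; rewrite !ap_nat; reflexivity).
Defined.

Definition PI : Psh.
Proof.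
  refine (mkPsh (fun Γ => Tm Γ iota) (fun Γ Γ' o t => wk t Γ' o) _ _).
  - abstract (intros; apply wk_id).
  - abstract (intros; symmetry; apply wk_comp).
Defined.

Definition Pone : Psh.
Proof.
  refine (mkPsh (fun _ => unit) (fun _ _ _ x => x) _ _); abstract (intros; reflexivity).
Defined.

Definition Pprod (P Q : Psh) : Psh.
Proof.
  refine (mkPsh (fun Γ => (PF P Γ * PF Q Γ)%type) (fun Γ Γ' o x => (pact o (fst x), pact o (snd x))) _ _).
  - abstract (intros Γ [a b]; simpl; rewrite !pact_id; reflexivity).
  - abstract (intros Γ Γ' Γ'' o1 o2 [a b]; simpl; rewrite !pact_comp; reflexivity).
Defined.

Definition ExpEl (P Q : Psh) (Γ : Ctx) : Type :=
  { f : forall Γ', OPE Γ' Γ -> PF P Γ' -> PF Q Γ' |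
    forall Γ' Γ'' (o : OPE Γ' Γ) (o' : OPE Γ'' Γ') p,
      pact o' (f Γ' o p) = f Γ'' (compOPE o' o) (pact o' p) }.

Definition expAp {P Q Γ} (f : ExpEl P Q Γ) {Γ'} (o : OPE Γ' Γ) (p : PF P Γ') : PF Q Γ' :=
  proj1_sig f Γ' o p.

Lemma expAp_nat {P Q Γ} (f : ExpEl P Q Γ) {Γ' Γ''} (o : OPE Γ' Γ) (o' : OPE Γ'' Γ') p :
  pact o' (expAp f o p) = expAp f (compOPE o' o) (pact o' p).
Proof. apply (proj2_sig f). Qed.

Lemma exp_ext {P Q Γ} (f g : ExpEl P Q Γ) :
  (forall Γ' (o : OPE Γ' Γ) p, expAp f o p = expAp g o p) -> f = g.
Proof.
  intros H. apply sig_ext. apply functional_extensionality_dep; intros Γ'.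
  apply functional_extensionality; intros o. apply functional_extensionality; intros p. apply H.
Qed.

Definition expAct {P Q Γ Γ1} (o1 : OPE Γ1 Γ) (f : ExpEl P Q Γ) : ExpEl P Q Γ1.
Proof.
  refine (exist _ (fun Γ' o p => expAp f (compOPE o o1) p) _).
  abstract (intros; rewrite expAp_nat, comp_assoc; reflexivity).
Defined.

Definition Pexp (P Q : Psh) : Psh.
Proof.
  refine (mkPsh (ExpEl P Q) (fun Γ Γ1 o1 f => expAct o1 f) _ _).
  - abstract (intros; apply exp_ext; intros; simpl; unfold expAp; simpl; rewrite comp_id_r; reflexivity).
  - abstract (intros; apply exp_ext; intros; unfold expAp; simpl; rewrite comp_assoc; reflexivity).
Defined.

Definition BoxEl (P : Psh) (Γ : Ctx) : Type :=
  { h : forall Γ' (o : OPE Γ' Γ) Δ (e : Ext Γ' Δ), PF P Δ |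
    forall Γ' o Δ e Δ' (o' : OPE Δ' Δ),
      pact o' (h Γ' o Δ e) =
      match factorOPE e Δ' o' with existT _ Γ'' (o2, e2) => h Γ'' (compOPE o2 o) Δ' e2 end }.

Definition boxAp {P Γ} (h : BoxEl P Γ) {Γ'} (o : OPE Γ' Γ) {Δ} (e : Ext Γ' Δ) : PF P Δ :=
  proj1_sig h Γ' o Δ e.

Lemma boxAp_nat {P Γ} (h : BoxEl P Γ) {Γ'} (o : OPE Γ' Γ) {Δ} (e : Ext Γ' Δ) {Δ'} (o' : OPE Δ' Δ) :
  pact o' (boxAp h o e) =
  match factorOPE e Δ' o' with existT _ Γ'' (o2, e2) => boxAp h (compOPE o2 o) e2 end.
Proof. apply (proj2_sig h). Qed.

Lemma box_ext {P Γ} (f g : BoxEl P Γ) :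
  (forall Γ' (o : OPE Γ' Γ) Δ (e : Ext Γ' Δ), boxAp f o e = boxAp g o e) -> f = g.
Proof.
  intros H. apply sig_ext. apply functional_extensionality_dep; intros Γ'.
  apply functional_extensionality_dep; intros o. apply functional_extensionality_dep; intros Δ.
  apply functional_extensionality; intros e. apply H.
Qed.

Definition boxAct {P Γ Γ1} (o1 : OPE Γ1 Γ) (h : BoxEl P Γ) : BoxEl P Γ1.
Proof.
  refine (exist _ (fun Γ' o Δ e => boxAp h (compOPE o o1) e) _).
  abstract (intros; rewrite boxAp_nat; destruct (factorOPE e Δ' o') as [G2 [o2 e2]];
            rewrite comp_assoc; reflexivity).
Defined.

Definition Pbox (P : Psh) : Psh.
Proof.
  refine (mkPsh (BoxEl P) (fun Γ Γ1 o1 h => boxAct o1 h) _ _).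
  - abstract (intros; apply box_ext; intros; unfold boxAp; simpl; rewrite comp_id_r; reflexivity).
  - abstract (intros; apply box_ext; intros; unfold boxAp; simpl; rewrite comp_assoc; reflexivity).
Defined.

Definition DiaEl (P : Psh) (Γ : Ctx) : Type := { Δ : Ctx & (PF P Δ * Ext Δ Γ)%type }.

Definition diaAct {P Γ Γ'} (o : OPE Γ' Γ) (d : DiaEl P Γ) : DiaEl P Γ' :=
  match d with existT _ Δ (p, e) =>
    match factorOPE e Γ' o with existT _ D' (o2, e2) => existT _ D' (pact o2 p, e2) end end.

Definition Pdia (P : Psh) : Psh.
Proof.
  refine (mkPsh (DiaEl P) (fun Γ Γ' o d => diaAct o d) _ _).
  - abstract (intros Γ [Δ [p e]]; unfold diaAct; rewrite FO_id, pact_id; reflexivity).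
  - abstract (intros Γ Γ' Γ'' o1 o2 [Δ [p e]]; unfold diaAct; rewrite FO_comp;
      destruct (factorOPE e Γ' o1) as [D1 [p1 e1]];
      destruct (factorOPE e1 Γ'' o2) as [D2 [p2 e2]]; rewrite pact_comp; reflexivity).
Defined.
Lemma pact_Pprod {P Q Γ Γ'} (o : OPE Γ' Γ) (x : PF (Pprod P Q) Γ) :
  pact o x = ((pact o (fst x), pact o (snd x)) : PF (Pprod P Q) Γ'). Proof. reflexivity. Qed.
Lemma pact_Pexp {P Q Γ Γ'} (o : OPE Γ' Γ) (f : PF (Pexp P Q) Γ) :
  pact o f = (expAct o f : PF (Pexp P Q) Γ'). Proof. reflexivity. Qed.
Lemma pact_Pbox {P Γ Γ'} (o : OPE Γ' Γ) (h : PF (Pbox P) Γ) :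
  pact o h = (boxAct o h : PF (Pbox P) Γ'). Proof. reflexivity. Qed.
Lemma pact_Pdia {P Γ Γ'} (o : OPE Γ' Γ) (d : PF (Pdia P) Γ) :
  pact o d = (diaAct o d : PF (Pdia P) Γ'). Proof. reflexivity. Qed.
Lemma expAp_act {P Q Γ Γ1 Γ'} (o1 : OPE Γ1 Γ) (f : ExpEl P Q Γ) (o : OPE Γ' Γ1) p :
  expAp (expAct o1 f) o p = expAp f (compOPE o o1) p. Proof. reflexivity. Qed.
Lemma boxAp_act {P Γ Γ1 Γ' Δ} (o1 : OPE Γ1 Γ) (h : BoxEl P Γ) (o : OPE Γ' Γ1) (e : Ext Γ' Δ) :
  boxAp (boxAct o1 h) o e = boxAp h (compOPE o o1) e. Proof. reflexivity. Qed.

Definition Pbang (P : Psh) : PHom P Pone.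
Proof. refine (exist _ (fun _ _ => tt) _). abstract (intros; reflexivity). Defined.

Definition Ppi1 {P Q : Psh} : PHom (Pprod P Q) P.
Proof. refine (exist _ (fun Γ x => fst x) _). abstract (intros; reflexivity). Defined.
Definition Ppi2 {P Q : Psh} : PHom (Pprod P Q) Q.
Proof. refine (exist _ (fun Γ x => snd x) _). abstract (intros; reflexivity). Defined.
Definition Ppair {P Q R : Psh} (f : PHom R P) (g : PHom R Q) : PHom R (Pprod P Q).
Proof.
  refine (exist _ (fun Γ x => (ap f x, ap g x)) _).
  abstract (intros; rewrite pact_Pprod; cbn [fst snd]; rewrite !ap_nat; reflexivity).
Defined.

Definition Pev {P Q : Psh} : PHom (Pprod (Pexp P Q) P) Q.
Proof.
  refine (exist _ (fun Γ x => expAp (fst x) (idOPE Γ) (snd x)) _).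
  abstract (intros Γ Γ' o [f p]; rewrite pact_Pprod; cbn [fst snd]; rewrite pact_Pexp, expAp_act, expAp_nat,
    comp_id_l, comp_id_r; reflexivity).
Defined.

Definition curEl {P Q R : Psh} (g : PHom (Pprod R P) Q) {Γ} (z : PF R Γ) : ExpEl P Q Γ.
Proof.
  refine (exist _ (fun Γ' o p => ap g ((pact o z, p) : PF (Pprod R P) Γ')) _).
  abstract (intros; rewrite <- ap_nat, pact_Pprod; simpl; rewrite pact_comp; reflexivity).
Defined.

Definition Pcur {P Q R : Psh} (g : PHom (Pprod R P) Q) : PHom R (Pexp P Q).
Proof.
  refine (exist _ (fun Γ z => curEl g z) _).
  abstract (intros; rewrite pact_Pexp; apply exp_ext; intros; rewrite expAp_act; unfold expAp; simpl;
    rewrite pact_comp; reflexivity).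
Defined.

Definition bmapEl {P Q : Psh} (f : PHom P Q) {Γ} (h : BoxEl P Γ) : BoxEl Q Γ.
Proof.
  refine (exist _ (fun Γ' o Δ e => ap f (boxAp h o e)) _).
  abstract (intros; rewrite <- ap_nat, boxAp_nat; destruct (factorOPE e Δ' o') as [G2 [o2 e2]]; reflexivity).
Defined.

Definition Pbmap {P Q : Psh} (f : PHom P Q) : PHom (Pbox P) (Pbox Q).
Proof.
  refine (exist _ (fun Γ h => bmapEl f h) _).
  abstract (intros; rewrite !pact_Pbox; apply box_ext; intros; reflexivity).
Defined.

Definition Pbeps (P : Psh) : PHom (Pbox P) P.
Proof.
  refine (exist _ (fun Γ h => boxAp h (idOPE Γ) ext_nil) _).
  abstract (intros Γ Γ' o h; rewrite pact_Pbox, boxAp_act, boxAp_nat; simpl;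
    rewrite comp_id_l, comp_id_r; reflexivity).
Defined.

Definition innerEl {P Γ Γ' Δ} (h : BoxEl P Γ) (o : OPE Γ' Γ) (e : Ext Γ' Δ) : BoxEl P Δ.
Proof.
  refine (exist _ (fun Δ1 o1 Δ2 e2 =>
    match factorOPE e Δ1 o1 with existT _ Γ2 (o2, e3) => boxAp h (compOPE o2 o) (extApp e3 e2) end) _).
  abstract (intros Δ1 o1 Δ2 e2 Δ' o';
    destruct (factorOPE e Δ1 o1) as [Γ2 [o2 e3]] eqn:E;
    rewrite boxAp_nat, FO_app;
    destruct (factorOPE e2 Δ' o') as [Δ1' [q1 e4]];
    rewrite FO_comp, E;
    destruct (factorOPE e3 Δ1' q1) as [Γ4 [o4 e5]];
    rewrite comp_assoc; reflexivity).
Defined.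

Lemma boxAp_inner {P Γ Γ' Δ Δ1 Δ2} (h : BoxEl P Γ) (o : OPE Γ' Γ) (e : Ext Γ' Δ) (o1 : OPE Δ1 Δ) (e2 : Ext Δ1 Δ2) :
  boxAp (innerEl h o e) o1 e2 =
  match factorOPE e Δ1 o1 with existT _ Γ2 (o2, e3) => boxAp h (compOPE o2 o) (extApp e3 e2) end.
Proof. reflexivity. Qed.

Definition deltaEl {P Γ} (h : BoxEl P Γ) : BoxEl (Pbox P) Γ.
Proof.
  refine (exist _ (fun Γ' o Δ e => (innerEl h o e : PF (Pbox P) Δ)) _).
  abstract (intros Γ' o Δ e Δ' o';
    destruct (factorOPE e Δ' o') as [Γ2 [o2 e2]] eqn:E;
    rewrite pact_Pbox; apply box_ext; intros Δ1 o1 Δ2 e3;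
    rewrite boxAp_act, !boxAp_inner, FO_comp, E;
    destruct (factorOPE e2 Δ1 o1) as [Γ3 [o3 e4]];
    rewrite comp_assoc; reflexivity).
Defined.

Lemma boxAp_delta {P Γ Γ' Δ} (h : BoxEl P Γ) (o : OPE Γ' Γ) (e : Ext Γ' Δ) :
  boxAp (deltaEl h) o e = innerEl h o e.
Proof. reflexivity. Qed.

Definition Pbdelta (P : Psh) : PHom (Pbox P) (Pbox (Pbox P)).
Proof.
  refine (exist _ (fun Γ h => deltaEl h) _).
  abstract (intros Γ Γ' o h; rewrite !pact_Pbox; apply box_ext; intros Γ1 o1 Δ e;
    rewrite boxAp_act, !boxAp_delta; apply box_ext; intros Δ1 o2 Δ2 e2;
    rewrite !boxAp_inner; destruct (factorOPE e Δ1 o2) as [Γ3 [o3 e3]];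
    rewrite boxAp_act, comp_assoc; reflexivity).
Defined.

Definition Plmap {P Q : Psh} (f : PHom P Q) : PHom (Pdia P) (Pdia Q).
Proof.
  refine (exist _ (fun Γ d => match d with existT _ Δ (p, e) => existT _ Δ (ap f p, e) end) _).
  abstract (intros Γ Γ' o [Δ [p e]]; rewrite !pact_Pdia; unfold diaAct;
    destruct (factorOPE e Γ' o) as [D' [o2 e2]]; rewrite ap_nat; reflexivity).
Defined.

Definition aunitEl {P : Psh} {Γ} (p : PF P Γ) : BoxEl (Pdia P) Γ.
Proof.
  refine (exist _ (fun Γ' o Δ e => (existT _ Γ' (pact o p, e) : PF (Pdia P) Δ)) _).
  abstract (intros; rewrite pact_Pdia; unfold diaAct;
    destruct (factorOPE e Δ' o') as [D' [o2 e2]]; rewrite pact_comp; reflexivity).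
Defined.

Definition Paunit (P : Psh) : PHom P (Pbox (Pdia P)).
Proof.
  refine (exist _ (fun Γ p => aunitEl p) _).
  abstract (intros; rewrite pact_Pbox; apply box_ext; intros; rewrite boxAp_act; unfold boxAp; simpl;
    rewrite pact_comp; reflexivity).
Defined.

Definition Pacounit (P : Psh) : PHom (Pdia (Pbox P)) P.
Proof.
  refine (exist _ (fun Γ d => match d with existT _ Δ (h, e) => boxAp h (idOPE Δ) e end) _).
  abstract (intros Γ Γ' o [Δ [h e]]; rewrite pact_Pdia; unfold diaAct; rewrite boxAp_nat;
    destruct (factorOPE e Γ' o) as [D' [o2 e2]]; rewrite pact_Pbox, boxAp_act, comp_id_l, comp_id_r;
    reflexivity).
Defined.
Ltac hext := apply hom_ext; intros.

Lemma Pcomp_id_l {X Y} (f : PHom X Y) : Pcomp (Pid Y) f = f. Proof. hext; reflexivity. Qed.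
Lemma Pcomp_id_r {X Y} (f : PHom X Y) : Pcomp f (Pid X) = f. Proof. hext; reflexivity. Qed.
Lemma Pcomp_assoc {X Y Z W} (f : PHom X Y) (g : PHom Y Z) (h : PHom Z W) :
  Pcomp h (Pcomp g f) = Pcomp (Pcomp h g) f. Proof. hext; reflexivity. Qed.
Lemma Pbang_uniq {X} (f : PHom X Pone) : f = Pbang X.
Proof. hext. destruct (ap f x). reflexivity. Qed.
Lemma Ppi1_pair {X Y Z} (f : PHom Z X) (g : PHom Z Y) : Pcomp Ppi1 (Ppair f g) = f. Proof. hext; reflexivity. Qed.
Lemma Ppi2_pair {X Y Z} (f : PHom Z X) (g : PHom Z Y) : Pcomp Ppi2 (Ppair f g) = g. Proof. hext; reflexivity. Qed.
Lemma Ppair_uniq {X Y Z} (h : PHom Z (Pprod X Y)) : h = Ppair (Pcomp Ppi1 h) (Pcomp Ppi2 h).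
Proof. hext. unfold ap at 2. simpl. destruct (ap h x). reflexivity. Qed.

Lemma Pev_cur {X Y Z} (f : PHom (Pprod Z X) Y) :
  Pcomp Pev (Ppair (Pcomp (Pcur f) Ppi1) Ppi2) = f.
Proof. hext. destruct x as [z p]. unfold ap at 1. simpl. unfold expAp; simpl. rewrite pact_id. reflexivity. Qed.

Lemma Pcur_uniq {X Y Z} (g : PHom Z (Pexp X Y)) :
  Pcur (Pcomp Pev (Ppair (Pcomp g Ppi1) Ppi2)) = g.
Proof.
  hext. apply exp_ext. intros Γ' o p. unfold ap at 1. simpl. unfold expAp at 1. simpl.
  change (proj1_sig (ap g (pact o x)) Γ' (idOPE Γ') p) with (expAp (ap g (pact o x)) (idOPE Γ') p).
  rewrite ap_nat, pact_Pexp, expAp_act, comp_id_l. reflexivity.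
Qed.

Lemma Pbmap_id {X} : Pbmap (Pid X) = Pid (Pbox X). Proof. hext. apply box_ext. intros. reflexivity. Qed.
Lemma Pbmap_comp {X Y Z} (f : PHom X Y) (g : PHom Y Z) : Pbmap (Pcomp g f) = Pcomp (Pbmap g) (Pbmap f).
Proof. hext. apply box_ext. intros. reflexivity. Qed.
Lemma Pbeps_nat {X Y} (f : PHom X Y) : Pcomp (Pbeps Y) (Pbmap f) = Pcomp f (Pbeps X).
Proof. hext. reflexivity. Qed.
Lemma Pbdelta_nat {X Y} (f : PHom X Y) :
  Pcomp (Pbdelta Y) (Pbmap f) = Pcomp (Pbmap (Pbmap f)) (Pbdelta X).
Proof.
  hext. apply box_ext. intros Γ' o Δ e. apply box_ext. intros Δ1 o1 Δ2 e2.
  unfold ap; simpl. destruct (factorOPE e Δ1 o1) as [G2 [o2 e3]]. reflexivity.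
Qed.

Lemma Pcomonad_l {X} : Pcomp (Pbeps (Pbox X)) (Pbdelta X) = Pid (Pbox X).
Proof.
  hext. apply box_ext. intros Γ' o Δ e. unfold ap; simpl.
  rewrite comp_id_r. f_equal. eu.
Qed.

Lemma Pcomonad_r {X} : Pcomp (Pbmap (Pbeps X)) (Pbdelta X) = Pid (Pbox X).
Proof.
  hext. apply box_ext. intros Γ' o Δ e. unfold ap; simpl.
  rewrite FO_id, comp_id_l. reflexivity.
Qed.

Lemma Pcomonad_assoc {X} :
  Pcomp (Pbdelta (Pbox X)) (Pbdelta X) = Pcomp (Pbmap (Pbdelta X)) (Pbdelta X).
Proof.
  hext. apply box_ext. intros Γ' o Δ e. unfold ap; simpl.
  apply box_ext. intros Δ1 o1 Δ2 e1.
  rewrite boxAp_inner, boxAp_delta.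
  destruct (factorOPE e Δ1 o1) as [Γ2 [o2 e3]] eqn:E1.
  apply box_ext. intros Δ3 o3 Δ4 e2.
  rewrite ?boxAp_delta, !boxAp_inner, FO_app.
  destruct (factorOPE e1 Δ3 o3) as [Δ5 [q e5]].
  rewrite boxAp_inner, FO_comp, E1.
  destruct (factorOPE e3 Δ5 q) as [Γ4 [o4 e4]].
  rewrite comp_assoc. f_equal. eu.
Qed.

Lemma Plmap_id {X} : Plmap (Pid X) = Pid (Pdia X). Proof. hext. destruct x as [Δ [p e]]. reflexivity. Qed.
Lemma Plmap_comp {X Y Z} (f : PHom X Y) (g : PHom Y Z) : Plmap (Pcomp g f) = Pcomp (Plmap g) (Plmap f).
Proof. hext. destruct x as [Δ [p e]]. reflexivity. Qed.
Lemma Paunit_nat {X Y} (f : PHom X Y) : Pcomp (Paunit Y) f = Pcomp (Pbmap (Plmap f)) (Paunit X).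
Proof. hext. apply box_ext. intros. unfold ap; simpl. unfold boxAp; simpl. rewrite <- ap_nat. reflexivity. Qed.
Lemma Pacounit_nat {X Y} (f : PHom X Y) : Pcomp (Pacounit Y) (Plmap (Pbmap f)) = Pcomp f (Pacounit X).
Proof. hext. destruct x as [Δ [h e]]. reflexivity. Qed.
Lemma Ptriangle_l {X} : Pcomp (Pacounit (Pdia X)) (Plmap (Paunit X)) = Pid (Pdia X).
Proof. hext. destruct x as [Δ [p e]]. unfold ap; simpl. unfold boxAp; simpl. rewrite pact_id. reflexivity. Qed.
Lemma Ptriangle_r {X} : Pcomp (Pbmap (Pacounit X)) (Paunit (Pbox X)) = Pid (Pbox X).
Proof.
  hext. apply box_ext. intros. unfold ap; simpl. unfold boxAp at 1; simpl. unfold boxAp at 1; simpl.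
  rewrite comp_id_l. reflexivity.
Qed.

Definition PModel : Model :=
  {| Ob := Psh; Hom := PHom; idm := Pid; comp := fun X Y Z g f => Pcomp g f;
     Defs.comp_id_l := fun X Y f => Pcomp_id_l f; Defs.comp_id_r := fun X Y f => Pcomp_id_r f;
     Defs.comp_assoc := fun X Y Z W f g h => Pcomp_assoc f g h;
     one := Pone; bang := Pbang; bang_uniq := fun X f => Pbang_uniq f;
     prod := Pprod; pi1 := fun X Y => Ppi1; pi2 := fun X Y => Ppi2; pair := fun X Y Z f g => Ppair f g;
     pi1_pair := fun X Y Z f g => Ppi1_pair f g; pi2_pair := fun X Y Z f g => Ppi2_pair f g;
     pair_uniq := fun X Y Z h => Ppair_uniq h;
     exp := Pexp; ev := fun X Y => Pev; cur := fun X Y Z f => Pcur f;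
     ev_cur := fun X Y Z f => Pev_cur f; cur_uniq := fun X Y Z g => Pcur_uniq g;
     Bx := Pbox; bmap := fun X Y f => Pbmap f; bmap_id := fun X => Pbmap_id;
     bmap_comp := fun X Y Z f g => Pbmap_comp f g;
     beps := Pbeps; beps_nat := fun X Y f => Pbeps_nat f;
     bdelta := Pbdelta; bdelta_nat := fun X Y f => Pbdelta_nat f;
     comonad_l := fun X => Pcomonad_l; comonad_r := fun X => Pcomonad_r;
     comonad_assoc := fun X => Pcomonad_assoc;
     Lk := Pdia; lmap := fun X Y f => Plmap f; lmap_id := fun X => Plmap_id;
     lmap_comp := fun X Y Z f g => Plmap_comp f g;
     aunit := Paunit; acounit := Pacounit;
     aunit_nat := fun X Y f => Paunit_nat f; acounit_nat := fun X Y f => Pacounit_nat f;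
     triangle_l := fun X => Ptriangle_l; triangle_r := fun X => Ptriangle_r |}.

Notation SA A := (semTy PModel PI A).
Notation SC G := (semCtx PModel PI G).

Record RR (A : Ty) : Type := mkRR {
  reify : forall Γ, PF (SA A) Γ -> Tm Γ A;
  reflect : forall Γ, Tm Γ A -> PF (SA A) Γ;
  reify_nat : forall Γ Γ' (o : OPE Γ' Γ) x, reify Γ' (pact o x) = wk (reify Γ x) Γ' o;
  reflect_nat : forall Γ Γ' (o : OPE Γ' Γ) t, reflect Γ' (wk t Γ' o) = pact o (reflect Γ t) }.
Arguments reify {A} r {Γ} x.
Arguments reflect {A} r {Γ} t.

Lemma wk_unbox {D G G' A} (t : Tm D (box A)) (e : Ext D G) (o : OPE G' G) :
  wk (unbox t e) G' o = match factorOPE e G' o with existT _ D' (o', e') => unbox (wk t D' o') e' end.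
Proof. reflexivity. Qed.

Definition RR_iota : RR iota.
Proof.
  refine (mkRR iota (fun Γ x => x) (fun Γ t => t) _ _); abstract (intros; reflexivity).
Defined.

Definition reflect_arr_el {A B} (ra : RR A) (rb : RR B) {Γ} (t : Tm Γ (arr A B)) : ExpEl (SA A) (SA B) Γ.
Proof.
  refine (exist _ (fun Γ' o a => reflect rb (app (wk t Γ' o) (reify ra a))) _).
  abstract (intros; rewrite <- reflect_nat; simpl; rewrite wk_comp, <- reify_nat; reflexivity).
Defined.

Definition RR_arr {A B} (ra : RR A) (rb : RR B) : RR (arr A B).
Proof.
  refine (mkRR (arr A B)
    (fun Γ f => lam (reify rb (expAp (f : ExpEl (SA A) (SA B) Γ) (dropOPE A (idOPE Γ)) (reflect ra (var vz)))))
    (fun Γ t => reflect_arr_el ra rb t) _ _).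
  - abstract (intros Γ Γ' o f; simpl;
      rewrite <- reify_nat, expAp_nat, <- comp_keep_drop;
      change (var (@vz Γ' A)) with (wk (var (@vz Γ A)) (cext Γ' A) (keepOPE A o));
      rewrite reflect_nat; reflexivity).
  - abstract (intros; apply exp_ext; intros; unfold expAp; simpl;
      rewrite wk_comp; reflexivity).
Defined.

Definition reflect_box_el {A} (ra : RR A) {Γ} (t : Tm Γ (box A)) : BoxEl (SA A) Γ.
Proof.
  refine (exist _ (fun Γ' o Δ e => reflect ra (unbox (wk t Γ' o) e)) _).
  abstract (intros; rewrite <- reflect_nat, wk_unbox; destruct (factorOPE e Δ' o') as [G2 [o2 e2]];
    rewrite wk_comp; reflexivity).
Defined.

Definition RR_box {A} (ra : RR A) : RR (box A).
Proof.
  refine (mkRR (box A)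
    (fun Γ h => tbox (reify ra (boxAp (h : BoxEl (SA A) Γ) (idOPE Γ) (ext_lk ext_nil))))
    (fun Γ t => reflect_box_el ra t) _ _).
  - abstract (intros Γ Γ' o h; simpl; rewrite <- reify_nat, boxAp_nat; simpl;
      rewrite comp_id_l, comp_id_r; reflexivity).
  - abstract (intros; apply box_ext; intros; unfold boxAp; simpl;
      rewrite wk_comp; reflexivity).
Defined.

Fixpoint rr (A : Ty) : RR A :=
  match A with
  | iota => RR_iota
  | arr A B => RR_arr (rr A) (rr B)
  | box A => RR_box (rr A)
  end.

Fixpoint R (A : Ty) : forall Γ, Tm Γ A -> PF (SA A) Γ -> Prop :=
  match A return forall Γ, Tm Γ A -> PF (SA A) Γ -> Prop with
  | iota => fun Γ t x => conv t x
  | arr A B => fun Γ t f => forall Γ' (o : OPE Γ' Γ) u a,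
      R A Γ' u a -> R B Γ' (app (wk t Γ' o) u) (expAp (f : ExpEl (SA A) (SA B) Γ) o a)
  | box A => fun Γ t h => forall Γ' (o : OPE Γ' Γ) Δ (e : Ext Γ' Δ),
      R A Δ (unbox (wk t Γ' o) e) (boxAp (h : BoxEl (SA A) Γ) o e)
  end.

Lemma R_mono {A Γ Γ'} (t : Tm Γ A) x (o : OPE Γ' Γ) : R A Γ t x -> R A Γ' (wk t Γ' o) (pact o x).
Proof.
  destruct A; simpl; intros H.
  - apply wk_conv; auto.
  - intros Γ'' o' u a Ha. rewrite wk_comp. exact (H _ (compOPE o' o) u a Ha).
  - intros Γ'' o' Δ e. rewrite wk_comp. exact (H _ (compOPE o' o) Δ e).
Qed.

Lemma R_conv {A Γ} (t t' : Tm Γ A) x : conv t t' -> R A Γ t' x -> R A Γ t x.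
Proof.
  revert Γ t t' x; induction A; simpl; intros Γ t t' x Hc H.
  - eapply cv_trans; eauto.
  - intros Γ' o u a Ha. eapply IHA2; [| apply H; eauto].
    apply cv_app; [apply wk_conv; auto | apply cv_refl].
  - intros Γ' o Δ e. eapply IHA; [| apply H]. apply cv_unbox. apply wk_conv; auto.
Qed.

Lemma R_rr (A : Ty) :
  (forall Γ (t : Tm Γ A) x, R A Γ t x -> conv t (reify (rr A) x)) /\
  (forall Γ (t : Tm Γ A), R A Γ t (reflect (rr A) t)).
Proof.
  induction A; split.
  - simpl; auto.
  - intros; simpl; apply cv_refl.
  - intros Γ t f H. simpl.
    eapply cv_trans; [apply cv_eta_fun|]. apply cv_lam.
    apply (proj1 IHA2). apply H. apply (proj2 IHA1).
  - intros Γ t. simpl. intros Γ' o u a Ha. unfold expAp; simpl.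
    eapply R_conv; [| apply (proj2 IHA2)].
    apply cv_app; [apply cv_refl | apply (proj1 IHA1); auto].
  - intros Γ t h H. simpl.
    eapply cv_trans; [apply cv_eta_box|]. apply cv_box.
    pose proof (H Γ (idOPE Γ) _ (ext_lk ext_nil)) as H1. rewrite wk_id in H1.
    apply (proj1 IHA). apply H1.
  - intros Γ t. simpl. intros Γ' o Δ e. unfold boxAp; simpl. apply (proj2 IHA).
Qed.
Fixpoint RC (D : Ctx) : forall Γ, Sub Γ D -> PF (SC D) Γ -> Prop :=
  match D return forall Γ, Sub Γ D -> PF (SC D) Γ -> Prop with
  | cnil => fun _ _ _ => True
  | cext D0 A => fun Γ s ρ => RC D0 Γ (fst s) (fst ρ) /\ R A Γ (snd s) (snd ρ)
  | clock D0 => fun Γ s ρ =>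
      match s with existT _ G1 (s1, e1) =>
        exists ρ1, ρ = (existT _ G1 (ρ1, e1) : PF (SC (clock D0)) Γ) /\ RC D0 G1 s1 ρ1 end
  end.

Lemma RC_mono {D Γ Γ'} (s : Sub Γ D) ρ (o : OPE Γ' Γ) :
  RC D Γ s ρ -> RC D Γ' (wkSub D Γ Γ' o s) (pact o ρ).
Proof.
  revert Γ Γ' s ρ o; induction D; intros Γ Γ' s ρ o H; simpl in *.
  - auto.
  - destruct H; split; [apply IHD; auto | apply R_mono; auto].
  - destruct s as [G1 [s1 e1]]. destruct H as [ρ1 [-> H]]. simpl.
    destruct (factorOPE e1 Γ' o) as [G2 [o2 e2]].
    exists (pact o2 ρ1). split; [reflexivity | apply IHD; auto].
Qed.

Lemma RC_var {D Γ A} (v : Var D A) s ρ :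
  RC D Γ s ρ -> R A Γ (substVar v Γ s) (ap (semVar PModel PI v) ρ).
Proof.
  revert s ρ; induction v; simpl; intros s ρ H; destruct H; auto.
Qed.



Lemma FSem {D Δ Γ} (e : Ext D Δ) (s : Sub Γ Δ) ρ : RC Δ Γ s ρ ->
  match factorSub e Γ s with existT _ G' (s', e') =>
    exists ρ', RC D G' s' ρ' /\
      forall (X : Psh) (f : PHom (SC D) (Pbox X)),
        ap (semUnbox PModel PI e X f) ρ = boxAp (ap f ρ') (idOPE G') e' end.
Proof.
  revert Γ s ρ; induction e; intros Γ s ρ H.
  - simpl. exists ρ. split; auto.
  - simpl in *. destruct H. apply IHe; auto.
  - destruct s as [G1 [s1 e1]]. destruct H as [ρ1 [-> H]]. simpl.
    specialize (IHe _ _ _ H).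
    destruct (factorSub e G1 s1) as [G3 [s3 e3]].
    destruct IHe as [ρ3 [HR Heq]]. exists ρ3. split; auto. intros X f.
    change (ap (semUnbox PModel PI (ext_lk e) X f) (existT _ G1 (ρ1, e1) : PF (SC (clock G)) Γ))
      with (boxAp (ap (semUnbox PModel PI e (Pbox X) (Pcomp (Pbdelta X) f)) ρ1) (idOPE G1) e1).
    rewrite Heq.
    change (ap (Pcomp (Pbdelta X) f) ρ3) with (deltaEl (ap f ρ3)).
    rewrite boxAp_delta, boxAp_inner, FO_id, comp_id_l. reflexivity.
Qed.

Lemma fund {D A} (t : Tm D A) : forall Γ s ρ, RC D Γ s ρ -> R A Γ (subst t Γ s) (ap (semTm PModel PI t) ρ).
Proof.
  induction t; intros Γ s ρ H.
  - apply RC_var; auto.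
  - simpl R. intros Γ' o u a Ha.
    assert (HRC : RC (cext G A) Γ' (wkSub G Γ Γ' o s, u) ((pact o ρ, a) : PF (SC (cext G A)) Γ'))
      by (split; [apply RC_mono; auto | auto]).
    pose proof (IHt _ _ _ HRC) as IH.
    eapply R_conv; [| exact IH].
    simpl. eapply cv_trans; [apply cv_beta_fun|].
    rewrite S2. simpl. rewrite S4. simpl. rewrite C_wk, res_drop.
    apply E1. simpl. split; [apply E2 | apply cv_refl].
  - simpl. pose proof (IHt1 _ _ _ H) as H1. simpl in H1.
    specialize (H1 Γ (idOPE Γ) _ _ (IHt2 _ _ _ H)). rewrite wk_id in H1. exact H1.
  - simpl R. intros Γ' o Δ e.
    assert (HRC : RC (clock G) Δ (existT _ Γ' (wkSub G Γ Γ' o s, e))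
                     (existT _ Γ' (pact o ρ, e) : PF (SC (clock G)) Δ))
      by (exists (pact o ρ); split; [reflexivity | apply RC_mono; auto]).
    pose proof (IHt _ _ _ HRC) as IH.
    eapply R_conv; [| exact IH].
    simpl. eapply cv_trans; [apply cv_beta_box|].
    rewrite S1, S4. simpl. apply E1. simpl. exists lf_nil. simpl. rewrite wkSub_id.
    pose proof (E2 (wkSub G Γ Γ' o s) (idOPE Γ')) as H2. rewrite res_id, wkSub_id in H2. exact H2.
  - simpl. pose proof (FSem e s ρ H) as HF.
    destruct (factorSub e Γ s) as [G' [s' e']].
    destruct HF as [ρ' [HR Heq]]. rewrite Heq.
    pose proof (IHt _ _ _ HR) as IH. simpl in IH.
    specialize (IH G' (idOPE G') Γ e'). rewrite wk_id in IH. exact IH.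
Qed.

Fixpoint idEnv (G : Ctx) : PF (SC G) G :=
  match G return PF (SC G) G with
  | cnil => tt
  | cext G0 A => ((pact (dropOPE A (idOPE G0)) (idEnv G0), reflect (rr A) (var vz)) : PF (SC (cext G0 A)) (cext G0 A))
  | clock G0 => (existT _ G0 (idEnv G0, ext_lk ext_nil) : PF (SC (clock G0)) (clock G0))
  end.

Lemma RC_id (G : Ctx) : RC G G (idSub G) (idEnv G).
Proof.
  induction G; simpl.
  - auto.
  - split; [apply RC_mono; auto | apply (proj2 (R_rr t))].
  - exists (idEnv G). split; auto.
Qed.

Definition nf {G A} (t : Tm G A) : Tm G A := reify (rr A) (ap (semTm PModel PI t) (idEnv G)).

Lemma nf_sound {G A} (t : Tm G A) : conv t (nf t).
Proof.
  pose proof (fund t G (idSub G) (idEnv G) (RC_id G)) as H.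
  apply (proj1 (R_rr A)) in H.
  pose proof (E3 t (idOPE G)) as H3. rewrite res_id, wk_id in H3.
  eapply cv_trans; [apply cv_sym; exact H3 | exact H].
Qed.

Theorem theorem6 (G : Ctx) (A : Ty) (t u : Tm G A) :
  (forall (M : Model) (I : Ob M), semTm M I t = semTm M I u) ->
  conv t u.
Proof.
  intros H. eapply cv_trans; [apply nf_sound|].
  unfold nf. rewrite (H PModel PI). apply cv_sym, nf_sound.
Qed.
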